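(* Let $\omega^{(1)}=(2,2,1)$, $\omega^{(2)}=(2,4)$, $\omega^{(3)}=(4,1,1)$, $\omega^{(4)}=(4,3)$, $\omega^{(5)}=(6,2)$. Then for $j=1,2,3,4,5$ respectively: $\dim(QP^{\otimes7}_{10})^{>0}(\omega^{(j)})=0,0,0,20,35$; $\dim(QP^{\otimes8}_{10})^{>0}(\omega^{(j)})=0,0,0,0,20$; and $\dim(QP^{\otimes h}_{10})^{>0}(\omega^{(j)})=0$ for all $j$ whenever $h\ge9$.
   Context: $P^{\otimes h}=\mathbb F_2[t_1,\dots,t_h]$ ($\deg t_i=1$) with the standard action of the mod 2 Steenrod algebra $\mathcal A$ ($\overline{\mathcal A}$ its positive-degree part). The weight vector of $t=t_1^{a_1}\cdots t_h^{a_h}$ is $\omega(t)$ with $\omega_i(t)=\sum_j\alpha_{i-1}(a_j)$, $\alpha_k(a)$ the $k$-th binary digit; weight vectors are ordered left-lexicographically. $(P^{\otimes h})^{>0}$ is the $\mathcal A$-submodule spanned by monomials with all exponents positive. For a weight vector $\omega$ of degree $n$, $(P^{\otimes h}_n)^{>0}(\omega)$ (resp. $(<\omega)$) is spanned by degree-$n$ monomials of $(P^{\otimes h})^{>0}$ with $\omega(t)\le\omega$ (resp. $<\omega$), and $(QP^{\otimes h}_n)^{>0}(\omega)$ is the quotient of $(P^{\otimes h}_n)^{>0}(\omega)$ by $(\overline{\mathcal A}(P^{\otimes h})^{>0}\cap(P^{\otimes h}_n)^{>0}(\omega))+(P^{\otimes h}_n)^{>0}(<\omega)$. *)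

(* Defs.v *)
From HB Require Import structures.
From mathcomp Require Import all_boot all_order all_algebra.
Set Implicit Arguments. Unset Strict Implicit. Unset Printing Implicit Defensive.
Import GRing.Theory.
Local Open Scope ring_scope.

(* Monomials t_1^{a_1}...t_h^{a_h} of degree n of (P^{(x)h})^{>0}:
   exponent functions 'I_h -> nat with all a_j > 0 and sum n
   (each exponent is then <= n, so it fits in 'I_n.+1). *)
Definition posmon_pred (h n : nat) : pred {ffun 'I_h -> 'I_n.+1} :=
  fun f => [forall j, (0 < (f j : nat))%N] && (\sum_j (f j : nat) == n)%N.

Definition PosMon (h n : nat) := {f : {ffun 'I_h -> 'I_n.+1} | @posmon_pred h n f}.

Definition mexp h n (m : PosMon h n) (j : 'I_h) : nat := (val m j : nat).

(* The degree-n part (P^{(x)h}_n)^{>0}: F_2-vector space with basis the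
   monomials of PosMon h n. *)
Definition Vsp (h n : nat) := {ffun PosMon h n -> ('F_2)^o}.

Definition monv h n (m : PosMon h n) : Vsp h n := [ffun b => (b == m)%:R].

Definition alpha (k a : nat) : nat := odd (a %/ 2 ^ k).

(* weight vector: weight a k = omega_{k+1}(t) = sum_j alpha_k(a_j). *)
Definition weight h (a : 'I_h -> nat) (k : nat) : nat := (\sum_j alpha k (a j))%N.

Definition wvec (s : seq nat) (k : nat) : nat := nth 0%N s k.

(* Left-lexicographic order on sequences nat -> nat, comparing the entries
   of index < N (all entries of index >= N vanish in our uses). *)
Definition lex_lt (N : nat) (w1 w2 : nat -> nat) : bool :=
  [exists i : 'I_N, (w1 i < w2 i)%N && [forall j : 'I_N, (j < i)%N ==> (w1 j == w2 j)]].
Definition lex_le (N : nat) (w1 w2 : nat -> nat) : bool :=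
  lex_lt N w1 w2 || [forall i : 'I_N, w1 i == w2 i].

(* Bound: for a degree-n monomial, alpha_k(a_j) = 0 when k >= n. *)
Definition wbound (n : nat) (s : seq nat) : nat := maxn (size s) n.

Definition Ple h n (s : seq nat) : {vspace Vsp h n} :=
  (\sum_(m : PosMon h n | lex_le (wbound n s) (weight (mexp m)) (wvec s)) <[monv m]>)%VS.
Definition Plt h n (s : seq nat) : {vspace Vsp h n} :=
  (\sum_(m : PosMon h n | lex_lt (wbound n s) (weight (mexp m)) (wvec s)) <[monv m]>)%VS.

(* Standard action of the Steenrod squares (Cartan formula):
   Sq^k(t_1^{a_1}...t_h^{a_h}) = sum over b with b_j >= a_j, sum b = sum a + k
   of prod_j binom(a_j, b_j - a_j) t^b  (mod 2).
   sqv n a is Sq^k(t^a) for k = n - deg(t^a), as an element of degree n. *)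
Definition sq_coef h (a b : 'I_h -> nat) : nat :=
  if [forall j, (a j <= b j)%N] then (\prod_j 'C(a j, b j - a j))%N else 0%N.

Definition sqv h n (a : 'I_h -> nat) : Vsp h n :=
  [ffun b => (sq_coef a (mexp b))%:R].

Definition Hit h n : {vspace Vsp h n} :=
  (\sum_(k < n.+1 | (0 < k)%N) \sum_(m : PosMon h (n - k)) <[sqv n (mexp m)]>)%VS.

Definition dimQP h n (s : seq nat) : nat :=
  (\dim (Ple h n s) - \dim ((Hit h n :&: Ple h n s) + Plt h n s)%VS)%N.

Definition omega1 : seq nat := [:: 2; 2; 1]%N.
Definition omega2 : seq nat := [:: 2; 4]%N.
Definition omega3 : seq nat := [:: 4; 1; 1]%N.
Definition omega4 : seq nat := [:: 4; 3]%N.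
Definition omega5 : seq nat := [:: 6; 2]%N.
Definition omegas : seq (seq nat) := [:: omega1; omega2; omega3; omega4; omega5].

(* Main.v *)
Require Import Defs.
From mathcomp Require Import all_boot all_order all_algebra.
Set Implicit Arguments. Unset Strict Implicit. Unset Printing Implicit Defensive.

Fixpoint comps (h n : nat) : seq (seq nat) :=
  match h with
  | 0 => if n is 0 then [:: [::]] else [::]
  | h'.+1 => flatten [seq [seq x :: c | c <- comps h' (n - x)] | x <- iota 1 n]
  end.
Definition validl (h n : nat) (l : seq nat) : bool :=
  [&& size l == h, all (fun x => 0 < x) l & sumn l == n].
Fixpoint sqcL (a b : seq nat) : nat :=
  match a, b with
  | [::], [::] => 1
  | x :: a', y :: b' => if x <= y then 'C(x, y - x) * sqcL a' b' else 0
  | _, _ => 0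
  end.
Definition wl (l : seq nat) (k : nat) : nat := sumn [seq alpha k x | x <- l].
Definition lexltb (N : nat) (w1 w2 : nat -> nat) : bool :=
  has (fun i => (w1 i < w2 i) && all (fun j => w1 j == w2 j) (iota 0 i)) (iota 0 N).
Definition lexleb (N : nat) (w1 w2 : nat -> nat) : bool :=
  lexltb N w1 w2 || all (fun i => w1 i == w2 i) (iota 0 N).
Definition LTl n s l := lexltb (wbound n s) (wl l) (wvec s).
Definition LEl n s l := lexleb (wbound n s) (wl l) (wvec s).

Definition hitvan h n (S : seq (seq nat)) :=
  all (fun k => all (fun a => ~~ odd (sumn [seq sqcL a l | l <- S])) (comps h (n - k))) (iota 1 n).
Definition up_ok h n s (up : seq (seq (seq nat) * seq nat)) :=
  all (fun Sq => [&& uniq Sq.1, all (validl h n) Sq.1, all (fun l => ~~ LTl n s l) Sq.1,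
                  hitvan h n Sq.1, validl h n Sq.2 & LEl n s Sq.2]) up &&
  all (fun i => all (fun j => odd (count (pred1 (nth ([::],[::]) up j).2) (nth ([::],[::]) up i).1) == (i == j))
        (iota 0 (size up))) (iota 0 (size up)).
Definition lowG (x : seq (seq nat) * seq (seq nat) * seq nat) (l : seq nat) : nat :=
  sumn [seq sqcL a l | a <- x.1.1] + sumn [seq nat_of_bool (b == l) | b <- x.1.2].
Definition low_ok h n s (low : seq (seq (seq nat) * seq (seq nat) * seq nat)) :=
  all (fun x => [&& all (fun a => validl h (sumn a) a && (sumn a < n)) x.1.1,
                    all (fun b => validl h n b && LTl n s b) x.1.2,
                    all (fun l => odd (sumn [seq sqcL a l | a <- x.1.1]) ==> LEl n s l) (comps h n)
                  & validl h n x.2]) low &&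
  all (fun i => all (fun j => odd (lowG (nth ([::],[::],[::]) low j) (nth ([::],[::],[::]) low i).2) == (i == j))
        (iota 0 (size low))) (iota 0 (size low)).
Definition cnt h n s := size (filter (LEl n s) (comps h n)).
From Stdlib Require Import FunctionalExtensionality.

Lemma lex_ltE N w1 w2 : lex_lt N w1 w2 = lexltb N w1 w2.
Proof.
rewrite /lex_lt /lexltb; apply/existsP/hasP => [[i /andP[lt /forallP fa]] | [i]].
  exists (nat_of_ord i); first by rewrite mem_iota /= add0n.
  rewrite lt /=; apply/allP => j; rewrite mem_iota add0n /= => ji.
  have jN : j < N by apply: ltn_trans ji (ltn_ord i).
  by have := fa (Ordinal jN); rewrite /= ji.
rewrite mem_iota add0n /= => iN /andP[lt /allP fa].
exists (Ordinal iN); rewrite /= lt /=; apply/forallP => j; apply/implyP => ji.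
by apply: fa; rewrite mem_iota add0n.
Qed.

Lemma lex_leE N w1 w2 : lex_le N w1 w2 = lexleb N w1 w2.
Proof.
rewrite /lex_le /lexleb lex_ltE; congr (_ || _).
apply/forallP/allP => [fa i | fa i].
  by rewrite mem_iota add0n /= => iN; exact: (fa (Ordinal iN)).
by apply: fa; rewrite mem_iota add0n /=.
Qed.

Definition lst h n (m : PosMon h n) : seq nat := [seq mexp m j | j <- enum 'I_h].

Lemma nth_lst h n (m : PosMon h n) (j : 'I_h) : nth 0 (lst m) j = mexp m j.
Proof. by rewrite /lst (nth_map j) ?size_enum_ord // nth_ord_enum. Qed.

Lemma size_lst h n (m : PosMon h n) : size (lst m) = h.
Proof. by rewrite size_map size_enum_ord. Qed.

Lemma sumn_enum h (F : 'I_h -> nat) : sumn [seq F j | j <- enum 'I_h] = \sum_j F j.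
Proof. by rewrite sumnE big_map big_enum. Qed.

Lemma weightE h n (m : PosMon h n) : weight (mexp m) = wl (lst m).
Proof.
apply: functional_extensionality => k.
by rewrite /weight /wl /lst -map_comp sumn_enum.
Qed.

Lemma lst_valid h n (m : PosMon h n) : validl h n (lst m).
Proof.
have /andP[/forallP pos /eqP sm] := valP m.
rewrite /validl size_lst eqxx /=; apply/andP; split.
  by apply/allP => x /mapP[j _ ->]; exact: pos.
by rewrite /lst sumn_enum; apply/eqP; exact: sm.
Qed.

Lemma lst_inj h n : injective (@lst h n).
Proof.
move=> m1 m2 e; apply: val_inj; apply/ffunP => j; apply: val_inj.
by have := nth_lst m1 j; rewrite e nth_lst.
Qed.

Lemma valid_ex h n l : validl h n l -> exists m : PosMon h n, lst m = l.
Proof.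
case/and3P => /eqP sz /allP pos /eqP sm.
have le_n : forall j, nth 0 l j <= n.
  move=> j; case: (ltnP j (size l)) => jl; last by rewrite nth_default.
  rewrite -sm; elim: l j jl {sz pos sm} => [|x l IH] [|j] //= jl.
    exact: leq_addr.
  by apply: leq_trans (IH _ jl) _; exact: leq_addl.
pose f := [ffun j : 'I_h => (inord (nth 0 l j) : 'I_n.+1)].
have fE : forall j, (f j : nat) = nth 0 l j by move=> j; rewrite ffunE inordK // ltnS.
have Pf : posmon_pred f.
  apply/andP; split.
    apply/forallP => j; rewrite fE; apply: pos; apply: mem_nth; by rewrite sz.
  apply/eqP; under eq_bigr do rewrite fE.
  rewrite -sm -sumn_enum; congr sumn.
  apply: (@eq_from_nth _ 0); rewrite size_map size_enum_ord // => i ih.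
  by rewrite (nth_map (Ordinal ih)) ?size_enum_ord // nth_enum_ord.
exists (exist _ f Pf); apply: (@eq_from_nth _ 0); rewrite size_lst // => i ih.
by have := nth_lst (exist _ f Pf) (Ordinal ih); rewrite /= /mexp /= fE => ->.
Qed.

Lemma comps_complete h n l : validl h n l -> l \in comps h n.
Proof.
elim: h n l => [|h IH] n [|x l] H.
- by case/and3P: H => _ _ /eqP <-.
- by case/and3P: H.
- by case/and3P: H.
- move: H; rewrite /validl /= eqSS => /and3P[sz /andP[x0 pos] /eqP sm].
  apply/flattenP; exists [seq x :: c | c <- comps h (n - x)].
    apply/mapP; exists x => //; rewrite mem_iota x0 /= add1n ltnS -sm; exact: leq_addr.
  apply/map_f/IH; rewrite /validl sz pos -sm addKn eqxx; done.
Qed.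

Lemma sq_coefE h (a b : 'I_h -> nat) :
  sq_coef a b = sqcL [seq a j | j <- enum 'I_h] [seq b j | j <- enum 'I_h].
Proof.
rewrite /sq_coef -big_enum /=.
have -> : [forall j, a j <= b j] = all (fun j => a j <= b j) (enum 'I_h).
  by apply/forallP/allP => H j //; apply: H; rewrite mem_enum.
elim: (enum 'I_h) => [|j r IH]; first by rewrite big_nil.
rewrite /= big_cons; case: (a j <= b j) => //=.
by rewrite -IH; case: (all _ _); rewrite ?muln0.
Qed.

Local Open Scope ring_scope.
Import GRing.Theory.
Lemma big_lst (R : Type) (idx : R) (op : Monoid.com_law idx) h n (S : seq (seq nat))
  (F : seq nat -> R) : uniq S -> all (validl h n) S ->
  \big[op/idx]_(m : PosMon h n | lst m \in S) F (lst m) = \big[op/idx]_(l <- S) F l.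
Proof.
move=> uS vS.
rewrite -(big_map (@lst h n) (fun l => l \in S) F) -big_filter.
apply: perm_big; apply: uniq_perm => //.
  by rewrite filter_uniq // map_inj_uniq ?index_enum_uniq //; exact: lst_inj.
move=> l; rewrite mem_filter; apply/andP/idP => [[]//|lS]; split => //.
have [m <-] := valid_ex (allP vS l lS); apply: map_f; exact: mem_index_enum.
Qed.

Lemma F2nat k : (k%:R : 'F_2) = (odd k)%:R.
Proof. by rewrite -(@Fp_nat_mod 2 isT) modn2. Qed.

Definition vG h n (G : seq nat -> nat) : Vsp h n := [ffun m => (G (lst m))%:R].
Definition phi h n (S : seq (seq nat)) (v : Vsp h n) : 'F_2 :=
  \sum_(m : PosMon h n | lst m \in S) v m.

Lemma phi_vG h n S G : uniq S -> all (validl h n) S ->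
  phi S (vG h n G) = (\sum_(l <- S) G l)%:R.
Proof.
move=> uS vS; rewrite /phi /vG.
rewrite (eq_bigr (fun m => (G (lst m))%:R)); last by move=> m _; rewrite ffunE.
by rewrite (@big_lst _ 0 _ h n S (fun l => (G l)%:R : 'F_2)) // natr_sum.
Qed.

Lemma phi_lin h n S a (u v : Vsp h n) : phi S (a *: u + v) = a * phi S u + phi S v.
Proof.
rewrite /phi mulr_sumr -big_split; apply: eq_bigr => m _.
by rewrite !ffunE.
Qed.

Section Bounds.
Variables (K : fieldType) (V : vectType K) (f : nat -> V -> K).
Hypothesis flin : forall i a u v, f i (a *: u + v) = a * f i u + f i v.

Lemma f0 i : f i 0 = 0.
Proof.
have := flin i 1 0 0; rewrite scaler0 addr0 mul1r.
by move/(congr1 (fun x => x - f i 0)); rewrite subrr addrK.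
Qed.

Lemma fZ i a u : f i (a *: u) = a * f i u.
Proof. by have := flin i a u 0; rewrite addr0 f0 addr0. Qed.

Lemma fD i u v : f i (u + v) = f i u + f i v.
Proof. by have := flin i 1 u v; rewrite scale1r mul1r. Qed.

Lemma fsum i (I : Type) (r : seq I) (P : pred I) (F : I -> V) :
  f i (\sum_(j <- r | P j) F j) = \sum_(j <- r | P j) f i (F j).
Proof.
elim: r => [|j r IH]; first by rewrite !big_nil f0.
by rewrite !big_cons; case: (P j); rewrite ?fD IH.
Qed.

Lemma free_dual (X : seq V) :
  (forall i j, (i < size X)%N -> (j < size X)%N -> f i X`_j = (i == j)%:R) -> free X.
Proof.
move=> dual; apply/(@freeP _ _ _ (in_tuple X)) => k sum0 i.
have := congr1 (f i) sum0; rewrite f0 fsum.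
rewrite (bigD1 i) //= big1 ?addr0.
  by rewrite fZ dual // eqxx mulr1.
by move=> j ji; rewrite fZ dual // (_ : (i == j :> nat) = false) ?mulr0 //; apply/negbTE; rewrite eq_sym; exact: ji.
Qed.

Lemma lower_bound (U : {vspace V}) (X : seq V) :
  {subset X <= U} ->
  (forall i j, (i < size X)%N -> (j < size X)%N -> f i X`_j = (i == j)%:R) ->
  (size X <= \dim U)%N.
Proof.
move=> XU dual; have := free_dual dual; rewrite /free => /eqP <-.
by apply: dimvS; apply/span_subvP.
Qed.

Lemma upper_bound (U W : {vspace V}) (Y : seq V) :
  (U <= W)%VS -> {subset Y <= W} ->
  (forall i v, (i < size Y)%N -> v \in U -> f i v = 0) ->
  (forall i j, (i < size Y)%N -> (j < size Y)%N -> f i Y`_j = (i == j)%:R) ->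
  (\dim U + size Y <= \dim W)%N.
Proof.
move=> UW YW van dual.
have fr := free_dual dual.
have cap : (U :&: <<Y>> = 0)%VS.
  apply/eqP; rewrite -subv0; apply/subvP => v /memv_capP[vU vY].
  rewrite memv0; have vE := coord_span (X := in_tuple Y) vY.
  have c0 : forall i : 'I_(size Y), coord (in_tuple Y) i v = 0.
    move=> i; have := van i v (ltn_ord i) vU.
    rewrite {1}vE fsum (bigD1 i) //= big1 ?addr0.
      by rewrite fZ dual // eqxx mulr1 => ->.
    by move=> j ji; rewrite fZ dual // (_ : (i == j :> nat) = false) ?mulr0 //; apply/negbTE; rewrite eq_sym; exact: ji.
  by rewrite vE big1 // => i _; rewrite c0 scale0r.
have : (\dim (U + <<Y>>) <= \dim W)%N.
  by apply: dimvS; rewrite subv_add UW; apply/span_subvP.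
by rewrite dimv_disjoint_sum // (eqP fr).
Qed.
End Bounds.

Lemma PleP h n s (m : PosMon h n) :
  lex_le (wbound n s) (weight (mexp m)) (wvec s) = LEl n s (lst m).
Proof. by rewrite weightE lex_leE. Qed.

Lemma PltP h n s (m : PosMon h n) :
  lex_lt (wbound n s) (weight (mexp m)) (wvec s) = LTl n s (lst m).
Proof. by rewrite weightE lex_ltE. Qed.

Lemma monvE h n (m : PosMon h n) : monv m = vG h n (fun l => nat_of_bool (lst m == l)).
Proof. by apply/ffunP => b; rewrite !ffunE (inj_eq (@lst_inj h n)) eq_sym. Qed.

Lemma vG_Ple h n s G : (forall l, l \in comps h n -> odd (G l) -> LEl n s l) ->
  vG h n G \in Ple h n s.
Proof.
move=> supp.
have -> : vG h n G = \sum_(m : PosMon h n | lex_le (wbound n s) (weight (mexp m)) (wvec s))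
                       (vG h n G m) *: monv m.
  apply/ffunP => b; rewrite sum_ffunE.
  case Pb : (lex_le (wbound n s) (weight (mexp b)) (wvec s)).
    rewrite (bigD1 b) //= big1 ?addr0.
      by rewrite !ffunE eqxx; symmetry; exact: (mulr1 _).
    by move=> m /andP[_ mb]; rewrite !ffunE eq_sym (negbTE mb); exact: (mulr0 _).
  rewrite big1; last first.
    by move=> m Pm; rewrite !ffunE; case: eqP => [bm|_]; [rewrite bm Pm in Pb | exact: (mulr0 _)].
  rewrite ffunE F2nat; case o : (odd _) => //.
  by move: Pb; rewrite PleP (supp _ (comps_complete (lst_valid b)) o).
by apply: memv_sumr => m _; apply: memvZ; exact: memv_line.
Qed.

Lemma monv_Plt h n s (m : PosMon h n) : LTl n s (lst m) -> monv m \in Plt h n s.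
Proof.
move=> lt; rewrite /Plt (bigD1 m) /=; last by rewrite PltP.
by apply: (subvP (addvSl _ _)); exact: memv_line.
Qed.

Lemma Plt_sub_Ple h n s : (Plt h n s <= Ple h n s)%VS.
Proof.
apply/subv_sumP => m Pm; apply: (sumv_sup m) => //.
by rewrite /lex_le Pm.
Qed.

Lemma phi_monv h n S (m : PosMon h n) : lst m \notin S -> phi S (monv m) = 0.
Proof.
move=> nS; rewrite /phi big1 // => b bS; rewrite ffunE.
by case: eqP => // bm; rewrite -bm bS in nS.
Qed.

Lemma phi_Plt h n s S v : all (fun l => ~~ LTl n s l) S -> v \in Plt h n s -> phi S v = 0.
Proof.
move=> nLT /memv_sumP[vs vsP ->].
rewrite (fsum (f := fun _ => @phi h n S) (fun i => @phi_lin h n S) 0) big1 // => m Pm.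
have /vlineP[k ->] := vsP m Pm.
rewrite (fZ (f := fun _ => @phi h n S) (fun i => @phi_lin h n S) 0) phi_monv ?mulr0 //.
apply/negP => mS; have := allP nLT _ mS; by rewrite -PltP Pm.
Qed.

Lemma sqvE h n d (a : PosMon h d) : sqv n (mexp a) = vG h n (sqcL (lst a)).
Proof. by apply/ffunP => b; rewrite !ffunE sq_coefE. Qed.

Lemma sumn_big (T : Type) (r : seq T) (F : T -> nat) : sumn [seq F x | x <- r] = (\sum_(x <- r) F x)%N.
Proof. by rewrite sumnE big_map. Qed.

Lemma phi_Hit h n S v : uniq S -> all (validl h n) S -> hitvan h n S ->
  v \in Hit h n -> phi S v = 0.
Proof.
move=> uS vS hv /memv_sumP[vs vsP ->].
rewrite (fsum (f := fun _ => @phi h n S) (fun i => @phi_lin h n S) 0) big1 // => k k0.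
have /memv_sumP[ws wsP ->] := vsP k k0.
rewrite (fsum (f := fun _ => @phi h n S) (fun i => @phi_lin h n S) 0) big1 // => a _.
have /vlineP[c ->] := wsP a isT.
rewrite (fZ (f := fun _ => @phi h n S) (fun i => @phi_lin h n S) 0) sqvE phi_vG // F2nat.
have kin : (k : nat) \in iota 1 n by rewrite mem_iota k0 add1n; exact: ltn_ord.
have := allP (allP hv _ kin) _ (comps_complete (lst_valid a)).
by rewrite sumn_big => /negbTE ->; rewrite mulr0.
Qed.

Lemma vG_Hit h n a : validl h (sumn a) a -> (sumn a < n)%N -> vG h n (sqcL a) \in Hit h n.
Proof.
move=> va lt.
have kn : (n - sumn a < n.+1)%N by rewrite ltnS leq_subr.
pose k := Ordinal kn.
have va' : validl h (n - k) a by rewrite /= subKn // ltnW.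
have [a' ea'] := valid_ex va'.
rewrite /Hit (bigD1 k) /=; last by rewrite subn_gt0.
apply: (subvP (addvSl _ _)); rewrite (bigD1 a') //=.
apply: (subvP (addvSl _ _)); rewrite sqvE ea'; exact: memv_line.
Qed.

Lemma dimPle h n s : uniq (comps h n) -> all (validl h n) (comps h n) ->
  (\dim (Ple h n s) <= size (filter (LEl n s) (comps h n)))%N.
Proof.
move=> uc vc; rewrite /Ple.
apply: (leq_trans (dimv_leq_sum _ _ _)).
apply: (@leq_trans (\sum_(m : PosMon h n | lex_le (wbound n s) (weight (mexp m)) (wvec s)) 1)%N).
  by apply: leq_sum => m _; rewrite dim_vline leq_b1.
rewrite (eq_bigl (fun m => lst m \in filter (LEl n s) (comps h n))); last first.
  by move=> m; rewrite mem_filter PleP comps_complete ?lst_valid ?andbT.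
rewrite (@big_lst _ 0%N _ h n _ (fun _ => 1%N)) ?sum1_size ?filter_uniq //.
by apply/allP => l; rewrite mem_filter => /andP[_ lc]; exact: (allP vc).
Qed.

Lemma vG_add h n (G1 G2 : seq nat -> nat) :
  vG h n (fun l => G1 l + G2 l)%N = vG h n G1 + vG h n G2.
Proof. by apply/ffunP => b; rewrite !ffunE natrD. Qed.

Lemma vG_sum h n (T : Type) (r : seq T) (G : T -> seq nat -> nat) :
  vG h n (fun l => sumn [seq G x l | x <- r]) = \sum_(x <- r) vG h n (G x).
Proof.
apply/ffunP => b; rewrite sum_ffunE ffunE sumn_big natr_sum.
by apply: eq_bigr => x _; rewrite ffunE.
Qed.

Lemma sum_eqcount (S : seq (seq nat)) q :
  (\sum_(l <- S) nat_of_bool (q == l))%N = count (pred1 q) S.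
Proof. by elim: S => [|x S IH]; rewrite ?big_nil // big_cons IH /= eq_sym. Qed.

Lemma phi1 h n p G : validl h n p -> phi [:: p] (vG h n G) = (odd (G p))%:R.
Proof. by move=> vp; rewrite phi_vG //= ?vp // big_cons big_nil addn0 F2nat. Qed.

Lemma case_dim h n s up low :
  uniq (comps h n) -> all (validl h n) (comps h n) ->
  up_ok h n s up -> low_ok h n s low ->
  (size low + size up = size (filter (LEl n s) (comps h n)))%N ->
  dimQP h n s = size up.
Proof.
move=> uc vc /andP[/allP upA /allP upD] /andP[/allP lowA /allP lowD] sz.
set X := ((Hit h n :&: Ple h n s) + Plt h n s)%VS.
have low_le : (size low <= \dim X)%N.
  have := @lower_bound _ _ (fun i => @phi h n [:: (nth ([::],[::],[::]) low i).2])
    (fun i => @phi_lin h n _) X [seq vG h n (lowG x) | x <- low].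
  rewrite size_map; apply.
    move=> _ /mapP[x xl ->].
    have /and4P[Av Bv supp pv] := lowA x xl.
    rewrite /lowG vG_add; apply: memv_add.
      rewrite memv_cap; apply/andP; split.
        rewrite vG_sum big_seq; apply: memv_suml => a aA.
        by have /andP[va lta] := allP Av a aA; exact: vG_Hit.
      apply: vG_Ple => l lc; exact: (implyP (allP supp l lc)).
    rewrite vG_sum big_seq; apply: memv_suml => b bB.
    have /andP[vb ltb] := allP Bv b bB.
    have [m em] := valid_ex vb; rewrite -em -monvE; apply: monv_Plt.
    by rewrite em.
  move=> i j il jl.
  rewrite (nth_map ([::],[::],[::])) // phi1.
    have iI : i \in iota 0 (size low) by rewrite mem_iota.
    have jI : j \in iota 0 (size low) by rewrite mem_iota.
    by have /eqP -> := allP (lowD i iI) j jI.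
  by have /and4P[_ _ _ ->] := lowA _ (mem_nth ([::],[::],[::]) il).
have up_le : (\dim X + size up <= \dim (Ple h n s))%N.
  have := @upper_bound _ _ (fun i => @phi h n (nth ([::],[::]) up i).1)
    (fun i => @phi_lin h n _) X (Ple h n s) [seq vG h n (fun l => nat_of_bool (x.2 == l)) | x <- up].
  rewrite size_map; apply.
  - by rewrite subv_add capvSr Plt_sub_Ple.
  - move=> _ /mapP[x xu ->]; apply: vG_Ple => l _.
    by have /and5P[_ _ _ _ /andP[_ le]] := upA x xu; case: eqP => // <-.
  - move=> i v il /memv_addP[v1 v1X [v2 v2X ->]].
    have /and5P[uS vS nlt hv _] := upA _ (mem_nth ([::],[::]) il).
    rewrite (fD (f := fun _ => @phi h n _) (fun _ => @phi_lin h n _) 0).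
    rewrite (phi_Plt nlt v2X) addr0.
    by move: v1X; rewrite memv_cap => /andP[v1H _]; exact: phi_Hit.
  - move=> i j il jl.
    have /and5P[uS vS _ _ _] := upA _ (mem_nth ([::],[::]) il).
    rewrite (nth_map ([::],[::])) // phi_vG // sum_eqcount F2nat.
    have iI : i \in iota 0 (size up) by rewrite mem_iota.
    have jI : j \in iota 0 (size up) by rewrite mem_iota.
    by have /eqP -> := allP (upD i iI) j jI.
have Ple_le := dimPle s uc vc.
rewrite /dimQP -/X.
have eX : \dim X = size low.
  apply/eqP; rewrite eqn_leq low_le andbT.
  by rewrite -(leq_add2r (size up)) sz (leq_trans up_le Ple_le).
have eP : \dim (Ple h n s) = (size low + size up)%N.
  apply/eqP; rewrite eqn_leq sz Ple_le /= -sz -eX //.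
by rewrite eP eX addKn.
Qed.

Lemma case_zero h n s :
  uniq (comps h n) -> all (validl h n) (comps h n) ->
  size (filter (LEl n s) (comps h n)) = 0%N -> dimQP h n s = 0%N.
Proof.
move=> uc vc z; have := dimPle s uc vc; rewrite z leqn0 /dimQP => /eqP ->.
by rewrite sub0n.
Qed.
Definition up_h7w4 : seq (seq (seq nat) * seq nat) :=
  [:: ([:: [:: 1; 1; 1; 1; 1; 1; 4]; [:: 1; 1; 1; 1; 1; 4; 1]; [:: 1; 1; 1; 1; 2; 2; 2]; [:: 1; 1; 1; 1; 4; 1; 1]; [:: 2; 1; 1; 1; 1; 1; 3]; [:: 2; 1; 1; 1; 1; 2; 2]; [:: 2; 1; 1; 1; 1; 3; 1]; [:: 2; 1; 1; 1; 2; 1; 2]; [:: 2; 1; 1; 1; 2; 2; 1]; [:: 2; 1; 1; 1; 3; 1; 1]; [:: 3; 2; 1; 1; 1; 1; 1]; [:: 4; 1; 1; 1; 1; 1; 1]], [:: 1; 1; 1; 1; 2; 2; 2]);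
  ([:: [:: 1; 1; 1; 1; 1; 1; 4]; [:: 1; 1; 1; 1; 1; 4; 1]; [:: 1; 1; 1; 2; 1; 2; 2]; [:: 1; 1; 1; 4; 1; 1; 1]; [:: 2; 1; 1; 1; 1; 1; 3]; [:: 2; 1; 1; 1; 1; 2; 2]; [:: 2; 1; 1; 1; 1; 3; 1]; [:: 2; 1; 1; 2; 1; 1; 2]; [:: 2; 1; 1; 2; 1; 2; 1]; [:: 2; 1; 1; 3; 1; 1; 1]; [:: 3; 2; 1; 1; 1; 1; 1]; [:: 4; 1; 1; 1; 1; 1; 1]], [:: 1; 1; 1; 2; 1; 2; 2]);
  ([:: [:: 1; 1; 1; 1; 1; 1; 4]; [:: 1; 1; 1; 1; 4; 1; 1]; [:: 1; 1; 1; 2; 2; 1; 2]; [:: 1; 1; 1; 4; 1; 1; 1]; [:: 2; 1; 1; 1; 1; 1; 3]; [:: 2; 1; 1; 1; 2; 1; 2]; [:: 2; 1; 1; 1; 3; 1; 1]; [:: 2; 1; 1; 2; 1; 1; 2]; [:: 2; 1; 1; 2; 2; 1; 1]; [:: 2; 1; 1; 3; 1; 1; 1]; [:: 3; 2; 1; 1; 1; 1; 1]; [:: 4; 1; 1; 1; 1; 1; 1]], [:: 1; 1; 1; 2; 2; 1; 2]);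
  ([:: [:: 1; 1; 1; 1; 1; 4; 1]; [:: 1; 1; 1; 1; 4; 1; 1]; [:: 1; 1; 1; 2; 2; 2; 1]; [:: 1; 1; 1; 4; 1; 1; 1]; [:: 2; 1; 1; 1; 1; 3; 1]; [:: 2; 1; 1; 1; 2; 2; 1]; [:: 2; 1; 1; 1; 3; 1; 1]; [:: 2; 1; 1; 2; 1; 2; 1]; [:: 2; 1; 1; 2; 2; 1; 1]; [:: 2; 1; 1; 3; 1; 1; 1]; [:: 3; 2; 1; 1; 1; 1; 1]; [:: 4; 1; 1; 1; 1; 1; 1]], [:: 1; 1; 1; 2; 2; 2; 1]);
  ([:: [:: 1; 1; 1; 1; 1; 1; 4]; [:: 1; 1; 1; 1; 1; 4; 1]; [:: 1; 1; 2; 1; 1; 2; 2]; [:: 1; 1; 4; 1; 1; 1; 1]; [:: 2; 1; 1; 1; 1; 1; 3]; [:: 2; 1; 1; 1; 1; 2; 2]; [:: 2; 1; 1; 1; 1; 3; 1]; [:: 2; 1; 2; 1; 1; 1; 2]; [:: 2; 1; 2; 1; 1; 2; 1]; [:: 2; 1; 3; 1; 1; 1; 1]; [:: 3; 2; 1; 1; 1; 1; 1]; [:: 4; 1; 1; 1; 1; 1; 1]], [:: 1; 1; 2; 1; 1; 2; 2]);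
  ([:: [:: 1; 1; 1; 1; 1; 1; 4]; [:: 1; 1; 1; 1; 4; 1; 1]; [:: 1; 1; 2; 1; 2; 1; 2]; [:: 1; 1; 4; 1; 1; 1; 1]; [:: 2; 1; 1; 1; 1; 1; 3]; [:: 2; 1; 1; 1; 2; 1; 2]; [:: 2; 1; 1; 1; 3; 1; 1]; [:: 2; 1; 2; 1; 1; 1; 2]; [:: 2; 1; 2; 1; 2; 1; 1]; [:: 2; 1; 3; 1; 1; 1; 1]; [:: 3; 2; 1; 1; 1; 1; 1]; [:: 4; 1; 1; 1; 1; 1; 1]], [:: 1; 1; 2; 1; 2; 1; 2]);
  ([:: [:: 1; 1; 1; 1; 1; 4; 1]; [:: 1; 1; 1; 1; 4; 1; 1]; [:: 1; 1; 2; 1; 2; 2; 1]; [:: 1; 1; 4; 1; 1; 1; 1]; [:: 2; 1; 1; 1; 1; 3; 1]; [:: 2; 1; 1; 1; 2; 2; 1]; [:: 2; 1; 1; 1; 3; 1; 1]; [:: 2; 1; 2; 1; 1; 2; 1]; [:: 2; 1; 2; 1; 2; 1; 1]; [:: 2; 1; 3; 1; 1; 1; 1]; [:: 3; 2; 1; 1; 1; 1; 1]; [:: 4; 1; 1; 1; 1; 1; 1]], [:: 1; 1; 2; 1; 2; 2; 1]);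
  ([:: [:: 1; 1; 1; 1; 1; 1; 4]; [:: 1; 1; 1; 4; 1; 1; 1]; [:: 1; 1; 2; 2; 1; 1; 2]; [:: 1; 1; 4; 1; 1; 1; 1]; [:: 2; 1; 1; 1; 1; 1; 3]; [:: 2; 1; 1; 2; 1; 1; 2]; [:: 2; 1; 1; 3; 1; 1; 1]; [:: 2; 1; 2; 1; 1; 1; 2]; [:: 2; 1; 2; 2; 1; 1; 1]; [:: 2; 1; 3; 1; 1; 1; 1]; [:: 3; 2; 1; 1; 1; 1; 1]; [:: 4; 1; 1; 1; 1; 1; 1]], [:: 1; 1; 2; 2; 1; 1; 2]);
  ([:: [:: 1; 1; 1; 1; 1; 4; 1]; [:: 1; 1; 1; 4; 1; 1; 1]; [:: 1; 1; 2; 2; 1; 2; 1]; [:: 1; 1; 4; 1; 1; 1; 1]; [:: 2; 1; 1; 1; 1; 3; 1]; [:: 2; 1; 1; 2; 1; 2; 1]; [:: 2; 1; 1; 3; 1; 1; 1]; [:: 2; 1; 2; 1; 1; 2; 1]; [:: 2; 1; 2; 2; 1; 1; 1]; [:: 2; 1; 3; 1; 1; 1; 1]; [:: 3; 2; 1; 1; 1; 1; 1]; [:: 4; 1; 1; 1; 1; 1; 1]], [:: 1; 1; 2; 2; 1; 2; 1]);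
  ([:: [:: 1; 1; 1; 1; 4; 1; 1]; [:: 1; 1; 1; 4; 1; 1; 1]; [:: 1; 1; 2; 2; 2; 1; 1]; [:: 1; 1; 4; 1; 1; 1; 1]; [:: 2; 1; 1; 1; 3; 1; 1]; [:: 2; 1; 1; 2; 2; 1; 1]; [:: 2; 1; 1; 3; 1; 1; 1]; [:: 2; 1; 2; 1; 2; 1; 1]; [:: 2; 1; 2; 2; 1; 1; 1]; [:: 2; 1; 3; 1; 1; 1; 1]; [:: 3; 2; 1; 1; 1; 1; 1]; [:: 4; 1; 1; 1; 1; 1; 1]], [:: 1; 1; 2; 2; 2; 1; 1]);
  ([:: [:: 1; 1; 1; 1; 1; 1; 4]; [:: 1; 1; 1; 1; 1; 4; 1]; [:: 1; 2; 1; 1; 1; 2; 2]; [:: 1; 4; 1; 1; 1; 1; 1]; [:: 2; 1; 1; 1; 1; 1; 3]; [:: 2; 1; 1; 1; 1; 2; 2]; [:: 2; 1; 1; 1; 1; 3; 1]; [:: 2; 2; 1; 1; 1; 1; 2]; [:: 2; 2; 1; 1; 1; 2; 1]; [:: 2; 3; 1; 1; 1; 1; 1]; [:: 3; 2; 1; 1; 1; 1; 1]; [:: 4; 1; 1; 1; 1; 1; 1]], [:: 1; 2; 1; 1; 1; 2; 2]);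
  ([:: [:: 1; 1; 1; 1; 1; 1; 4]; [:: 1; 1; 1; 1; 4; 1; 1]; [:: 1; 2; 1; 1; 2; 1; 2]; [:: 1; 4; 1; 1; 1; 1; 1]; [:: 2; 1; 1; 1; 1; 1; 3]; [:: 2; 1; 1; 1; 2; 1; 2]; [:: 2; 1; 1; 1; 3; 1; 1]; [:: 2; 2; 1; 1; 1; 1; 2]; [:: 2; 2; 1; 1; 2; 1; 1]; [:: 2; 3; 1; 1; 1; 1; 1]; [:: 3; 2; 1; 1; 1; 1; 1]; [:: 4; 1; 1; 1; 1; 1; 1]], [:: 1; 2; 1; 1; 2; 1; 2]);
  ([:: [:: 1; 1; 1; 1; 1; 4; 1]; [:: 1; 1; 1; 1; 4; 1; 1]; [:: 1; 2; 1; 1; 2; 2; 1]; [:: 1; 4; 1; 1; 1; 1; 1]; [:: 2; 1; 1; 1; 1; 3; 1]; [:: 2; 1; 1; 1; 2; 2; 1]; [:: 2; 1; 1; 1; 3; 1; 1]; [:: 2; 2; 1; 1; 1; 2; 1]; [:: 2; 2; 1; 1; 2; 1; 1]; [:: 2; 3; 1; 1; 1; 1; 1]; [:: 3; 2; 1; 1; 1; 1; 1]; [:: 4; 1; 1; 1; 1; 1; 1]], [:: 1; 2; 1; 1; 2; 2; 1]);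
  ([:: [:: 1; 1; 1; 1; 1; 1; 4]; [:: 1; 1; 1; 4; 1; 1; 1]; [:: 1; 2; 1; 2; 1; 1; 2]; [:: 1; 4; 1; 1; 1; 1; 1]; [:: 2; 1; 1; 1; 1; 1; 3]; [:: 2; 1; 1; 2; 1; 1; 2]; [:: 2; 1; 1; 3; 1; 1; 1]; [:: 2; 2; 1; 1; 1; 1; 2]; [:: 2; 2; 1; 2; 1; 1; 1]; [:: 2; 3; 1; 1; 1; 1; 1]; [:: 3; 2; 1; 1; 1; 1; 1]; [:: 4; 1; 1; 1; 1; 1; 1]], [:: 1; 2; 1; 2; 1; 1; 2]);
  ([:: [:: 1; 1; 1; 1; 1; 4; 1]; [:: 1; 1; 1; 4; 1; 1; 1]; [:: 1; 2; 1; 2; 1; 2; 1]; [:: 1; 4; 1; 1; 1; 1; 1]; [:: 2; 1; 1; 1; 1; 3; 1]; [:: 2; 1; 1; 2; 1; 2; 1]; [:: 2; 1; 1; 3; 1; 1; 1]; [:: 2; 2; 1; 1; 1; 2; 1]; [:: 2; 2; 1; 2; 1; 1; 1]; [:: 2; 3; 1; 1; 1; 1; 1]; [:: 3; 2; 1; 1; 1; 1; 1]; [:: 4; 1; 1; 1; 1; 1; 1]], [:: 1; 2; 1; 2; 1; 2; 1]);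
  ([:: [:: 1; 1; 1; 1; 4; 1; 1]; [:: 1; 1; 1; 4; 1; 1; 1]; [:: 1; 2; 1; 2; 2; 1; 1]; [:: 1; 4; 1; 1; 1; 1; 1]; [:: 2; 1; 1; 1; 3; 1; 1]; [:: 2; 1; 1; 2; 2; 1; 1]; [:: 2; 1; 1; 3; 1; 1; 1]; [:: 2; 2; 1; 1; 2; 1; 1]; [:: 2; 2; 1; 2; 1; 1; 1]; [:: 2; 3; 1; 1; 1; 1; 1]; [:: 3; 2; 1; 1; 1; 1; 1]; [:: 4; 1; 1; 1; 1; 1; 1]], [:: 1; 2; 1; 2; 2; 1; 1]);
  ([:: [:: 1; 1; 1; 1; 1; 1; 4]; [:: 1; 1; 4; 1; 1; 1; 1]; [:: 1; 2; 2; 1; 1; 1; 2]; [:: 1; 4; 1; 1; 1; 1; 1]; [:: 2; 1; 1; 1; 1; 1; 3]; [:: 2; 1; 2; 1; 1; 1; 2]; [:: 2; 1; 3; 1; 1; 1; 1]; [:: 2; 2; 1; 1; 1; 1; 2]; [:: 2; 2; 2; 1; 1; 1; 1]; [:: 2; 3; 1; 1; 1; 1; 1]; [:: 3; 2; 1; 1; 1; 1; 1]; [:: 4; 1; 1; 1; 1; 1; 1]], [:: 1; 2; 2; 1; 1; 1; 2]);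
  ([:: [:: 1; 1; 1; 1; 1; 4; 1]; [:: 1; 1; 4; 1; 1; 1; 1]; [:: 1; 2; 2; 1; 1; 2; 1]; [:: 1; 4; 1; 1; 1; 1; 1]; [:: 2; 1; 1; 1; 1; 3; 1]; [:: 2; 1; 2; 1; 1; 2; 1]; [:: 2; 1; 3; 1; 1; 1; 1]; [:: 2; 2; 1; 1; 1; 2; 1]; [:: 2; 2; 2; 1; 1; 1; 1]; [:: 2; 3; 1; 1; 1; 1; 1]; [:: 3; 2; 1; 1; 1; 1; 1]; [:: 4; 1; 1; 1; 1; 1; 1]], [:: 1; 2; 2; 1; 1; 2; 1]);
  ([:: [:: 1; 1; 1; 1; 4; 1; 1]; [:: 1; 1; 4; 1; 1; 1; 1]; [:: 1; 2; 2; 1; 2; 1; 1]; [:: 1; 4; 1; 1; 1; 1; 1]; [:: 2; 1; 1; 1; 3; 1; 1]; [:: 2; 1; 2; 1; 2; 1; 1]; [:: 2; 1; 3; 1; 1; 1; 1]; [:: 2; 2; 1; 1; 2; 1; 1]; [:: 2; 2; 2; 1; 1; 1; 1]; [:: 2; 3; 1; 1; 1; 1; 1]; [:: 3; 2; 1; 1; 1; 1; 1]; [:: 4; 1; 1; 1; 1; 1; 1]], [:: 1; 2; 2; 1; 2; 1; 1]);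
  ([:: [:: 1; 1; 1; 4; 1; 1; 1]; [:: 1; 1; 4; 1; 1; 1; 1]; [:: 1; 2; 2; 2; 1; 1; 1]; [:: 1; 4; 1; 1; 1; 1; 1]; [:: 2; 1; 1; 3; 1; 1; 1]; [:: 2; 1; 2; 2; 1; 1; 1]; [:: 2; 1; 3; 1; 1; 1; 1]; [:: 2; 2; 1; 2; 1; 1; 1]; [:: 2; 2; 2; 1; 1; 1; 1]; [:: 2; 3; 1; 1; 1; 1; 1]; [:: 3; 2; 1; 1; 1; 1; 1]; [:: 4; 1; 1; 1; 1; 1; 1]], [:: 1; 2; 2; 2; 1; 1; 1])].

Definition low_h7w4 : seq (seq (seq nat) * seq (seq nat) * seq nat) :=
  [:: ([:: [:: 1; 1; 1; 1; 2; 2; 1]], [:: ], [:: 1; 1; 1; 1; 2; 2; 2]);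
  ([:: [:: 1; 1; 1; 2; 1; 2; 1]], [:: ], [:: 1; 1; 1; 2; 1; 2; 2]);
  ([:: [:: 1; 1; 1; 2; 2; 1; 1]], [:: ], [:: 1; 1; 1; 2; 2; 1; 2]);
  ([:: [:: 1; 1; 2; 1; 1; 2; 1]], [:: ], [:: 1; 1; 2; 1; 1; 2; 2]);
  ([:: [:: 1; 1; 2; 1; 2; 1; 1]], [:: ], [:: 1; 1; 2; 1; 2; 1; 2]);
  ([:: [:: 1; 1; 2; 2; 1; 1; 1]], [:: ], [:: 1; 1; 2; 2; 1; 1; 2]);
  ([:: [:: 1; 2; 1; 1; 1; 2; 1]], [:: ], [:: 1; 2; 1; 1; 1; 2; 2]);
  ([:: [:: 1; 2; 1; 1; 2; 1; 1]], [:: ], [:: 1; 2; 1; 1; 2; 1; 2]);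
  ([:: [:: 1; 2; 1; 2; 1; 1; 1]], [:: ], [:: 1; 2; 1; 2; 1; 1; 2]);
  ([:: [:: 1; 2; 2; 1; 1; 1; 1]], [:: ], [:: 1; 2; 2; 1; 1; 1; 2]);
  ([:: [:: 1; 1; 1; 1; 1; 2; 2]; [:: 1; 1; 1; 1; 2; 2; 1]; [:: 1; 1; 1; 2; 1; 2; 1]; [:: 1; 1; 2; 1; 1; 2; 1]; [:: 1; 2; 1; 1; 1; 2; 1]], [:: ], [:: 2; 1; 1; 1; 1; 2; 2]);
  ([:: [:: 1; 1; 1; 1; 2; 1; 2]; [:: 1; 1; 1; 1; 2; 2; 1]; [:: 1; 1; 1; 2; 2; 1; 1]; [:: 1; 1; 2; 1; 2; 1; 1]; [:: 1; 2; 1; 1; 2; 1; 1]], [:: ], [:: 2; 1; 1; 1; 2; 1; 2]);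
  ([:: [:: 1; 1; 1; 2; 1; 1; 2]; [:: 1; 1; 1; 2; 1; 2; 1]; [:: 1; 1; 1; 2; 2; 1; 1]; [:: 1; 1; 2; 2; 1; 1; 1]; [:: 1; 2; 1; 2; 1; 1; 1]], [:: ], [:: 2; 1; 1; 2; 1; 1; 2]);
  ([:: [:: 1; 1; 2; 1; 1; 1; 2]; [:: 1; 1; 2; 1; 1; 2; 1]; [:: 1; 1; 2; 1; 2; 1; 1]; [:: 1; 1; 2; 2; 1; 1; 1]; [:: 1; 2; 2; 1; 1; 1; 1]], [:: ], [:: 2; 1; 2; 1; 1; 1; 2]);
  ([:: [:: 1; 2; 1; 1; 1; 1; 2]; [:: 1; 2; 1; 1; 1; 2; 1]; [:: 1; 2; 1; 1; 2; 1; 1]; [:: 1; 2; 1; 2; 1; 1; 1]; [:: 1; 2; 2; 1; 1; 1; 1]], [:: ], [:: 2; 2; 1; 1; 1; 1; 2])].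

Definition up_h7w5 : seq (seq (seq nat) * seq nat) :=
  [:: ([:: [:: 1; 1; 1; 1; 1; 2; 3]; [:: 2; 1; 1; 1; 1; 1; 3]], [:: 1; 1; 1; 1; 1; 2; 3]);
  ([:: [:: 1; 1; 1; 1; 1; 3; 2]; [:: 2; 1; 1; 1; 1; 3; 1]], [:: 1; 1; 1; 1; 1; 3; 2]);
  ([:: [:: 1; 1; 1; 1; 2; 1; 3]; [:: 2; 1; 1; 1; 1; 1; 3]], [:: 1; 1; 1; 1; 2; 1; 3]);
  ([:: [:: 1; 1; 1; 1; 2; 3; 1]; [:: 2; 1; 1; 1; 1; 3; 1]], [:: 1; 1; 1; 1; 2; 3; 1]);
  ([:: [:: 1; 1; 1; 1; 3; 1; 2]; [:: 2; 1; 1; 1; 3; 1; 1]], [:: 1; 1; 1; 1; 3; 1; 2]);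
  ([:: [:: 1; 1; 1; 1; 3; 2; 1]; [:: 2; 1; 1; 1; 3; 1; 1]], [:: 1; 1; 1; 1; 3; 2; 1]);
  ([:: [:: 1; 1; 1; 2; 1; 1; 3]; [:: 2; 1; 1; 1; 1; 1; 3]], [:: 1; 1; 1; 2; 1; 1; 3]);
  ([:: [:: 1; 1; 1; 2; 1; 3; 1]; [:: 2; 1; 1; 1; 1; 3; 1]], [:: 1; 1; 1; 2; 1; 3; 1]);
  ([:: [:: 1; 1; 1; 2; 3; 1; 1]; [:: 2; 1; 1; 1; 3; 1; 1]], [:: 1; 1; 1; 2; 3; 1; 1]);
  ([:: [:: 1; 1; 1; 3; 1; 1; 2]; [:: 2; 1; 1; 3; 1; 1; 1]], [:: 1; 1; 1; 3; 1; 1; 2]);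
  ([:: [:: 1; 1; 1; 3; 1; 2; 1]; [:: 2; 1; 1; 3; 1; 1; 1]], [:: 1; 1; 1; 3; 1; 2; 1]);
  ([:: [:: 1; 1; 1; 3; 2; 1; 1]; [:: 2; 1; 1; 3; 1; 1; 1]], [:: 1; 1; 1; 3; 2; 1; 1]);
  ([:: [:: 1; 1; 2; 1; 1; 1; 3]; [:: 2; 1; 1; 1; 1; 1; 3]], [:: 1; 1; 2; 1; 1; 1; 3]);
  ([:: [:: 1; 1; 2; 1; 1; 3; 1]; [:: 2; 1; 1; 1; 1; 3; 1]], [:: 1; 1; 2; 1; 1; 3; 1]);
  ([:: [:: 1; 1; 2; 1; 3; 1; 1]; [:: 2; 1; 1; 1; 3; 1; 1]], [:: 1; 1; 2; 1; 3; 1; 1]);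
  ([:: [:: 1; 1; 2; 3; 1; 1; 1]; [:: 2; 1; 1; 3; 1; 1; 1]], [:: 1; 1; 2; 3; 1; 1; 1]);
  ([:: [:: 1; 1; 3; 1; 1; 1; 2]; [:: 2; 1; 3; 1; 1; 1; 1]], [:: 1; 1; 3; 1; 1; 1; 2]);
  ([:: [:: 1; 1; 3; 1; 1; 2; 1]; [:: 2; 1; 3; 1; 1; 1; 1]], [:: 1; 1; 3; 1; 1; 2; 1]);
  ([:: [:: 1; 1; 3; 1; 2; 1; 1]; [:: 2; 1; 3; 1; 1; 1; 1]], [:: 1; 1; 3; 1; 2; 1; 1]);
  ([:: [:: 1; 1; 3; 2; 1; 1; 1]; [:: 2; 1; 3; 1; 1; 1; 1]], [:: 1; 1; 3; 2; 1; 1; 1]);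
  ([:: [:: 1; 2; 1; 1; 1; 1; 3]; [:: 2; 1; 1; 1; 1; 1; 3]], [:: 1; 2; 1; 1; 1; 1; 3]);
  ([:: [:: 1; 2; 1; 1; 1; 3; 1]; [:: 2; 1; 1; 1; 1; 3; 1]], [:: 1; 2; 1; 1; 1; 3; 1]);
  ([:: [:: 1; 2; 1; 1; 3; 1; 1]; [:: 2; 1; 1; 1; 3; 1; 1]], [:: 1; 2; 1; 1; 3; 1; 1]);
  ([:: [:: 1; 2; 1; 3; 1; 1; 1]; [:: 2; 1; 1; 3; 1; 1; 1]], [:: 1; 2; 1; 3; 1; 1; 1]);
  ([:: [:: 1; 2; 3; 1; 1; 1; 1]; [:: 2; 1; 3; 1; 1; 1; 1]], [:: 1; 2; 3; 1; 1; 1; 1]);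
  ([:: [:: 1; 3; 1; 1; 1; 1; 2]; [:: 2; 3; 1; 1; 1; 1; 1]], [:: 1; 3; 1; 1; 1; 1; 2]);
  ([:: [:: 1; 3; 1; 1; 1; 2; 1]; [:: 2; 3; 1; 1; 1; 1; 1]], [:: 1; 3; 1; 1; 1; 2; 1]);
  ([:: [:: 1; 3; 1; 1; 2; 1; 1]; [:: 2; 3; 1; 1; 1; 1; 1]], [:: 1; 3; 1; 1; 2; 1; 1]);
  ([:: [:: 1; 3; 1; 2; 1; 1; 1]; [:: 2; 3; 1; 1; 1; 1; 1]], [:: 1; 3; 1; 2; 1; 1; 1]);
  ([:: [:: 1; 3; 2; 1; 1; 1; 1]; [:: 2; 3; 1; 1; 1; 1; 1]], [:: 1; 3; 2; 1; 1; 1; 1]);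
  ([:: [:: 3; 1; 1; 1; 1; 1; 2]; [:: 3; 2; 1; 1; 1; 1; 1]], [:: 3; 1; 1; 1; 1; 1; 2]);
  ([:: [:: 3; 1; 1; 1; 1; 2; 1]; [:: 3; 2; 1; 1; 1; 1; 1]], [:: 3; 1; 1; 1; 1; 2; 1]);
  ([:: [:: 3; 1; 1; 1; 2; 1; 1]; [:: 3; 2; 1; 1; 1; 1; 1]], [:: 3; 1; 1; 1; 2; 1; 1]);
  ([:: [:: 3; 1; 1; 2; 1; 1; 1]; [:: 3; 2; 1; 1; 1; 1; 1]], [:: 3; 1; 1; 2; 1; 1; 1]);
  ([:: [:: 3; 1; 2; 1; 1; 1; 1]; [:: 3; 2; 1; 1; 1; 1; 1]], [:: 3; 1; 2; 1; 1; 1; 1])].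

Definition low_h7w5 : seq (seq (seq nat) * seq (seq nat) * seq nat) :=
  [:: ([:: ], [:: [:: 1; 1; 1; 1; 1; 1; 4]], [:: 1; 1; 1; 1; 1; 1; 4]);
  ([:: [:: 1; 1; 1; 1; 1; 1; 3]], [:: [:: 1; 1; 1; 1; 1; 1; 4]], [:: 1; 1; 1; 1; 1; 2; 3]);
  ([:: [:: 1; 1; 1; 1; 1; 3; 1]], [:: [:: 1; 1; 1; 1; 1; 4; 1]], [:: 1; 1; 1; 1; 1; 3; 2]);
  ([:: ], [:: [:: 1; 1; 1; 1; 1; 4; 1]], [:: 1; 1; 1; 1; 1; 4; 1]);
  ([:: ], [:: [:: 1; 1; 1; 1; 2; 2; 2]], [:: 1; 1; 1; 1; 2; 2; 2]);
  ([:: [:: 1; 1; 1; 1; 3; 1; 1]], [:: [:: 1; 1; 1; 1; 4; 1; 1]], [:: 1; 1; 1; 1; 3; 1; 2]);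
  ([:: ], [:: [:: 1; 1; 1; 1; 4; 1; 1]], [:: 1; 1; 1; 1; 4; 1; 1]);
  ([:: ], [:: [:: 1; 1; 1; 2; 1; 2; 2]], [:: 1; 1; 1; 2; 1; 2; 2]);
  ([:: ], [:: [:: 1; 1; 1; 2; 2; 1; 2]], [:: 1; 1; 1; 2; 2; 1; 2]);
  ([:: ], [:: [:: 1; 1; 1; 2; 2; 2; 1]], [:: 1; 1; 1; 2; 2; 2; 1]);
  ([:: [:: 1; 1; 1; 3; 1; 1; 1]], [:: [:: 1; 1; 1; 4; 1; 1; 1]], [:: 1; 1; 1; 3; 1; 1; 2]);
  ([:: ], [:: [:: 1; 1; 1; 4; 1; 1; 1]], [:: 1; 1; 1; 4; 1; 1; 1]);
  ([:: ], [:: [:: 1; 1; 2; 1; 1; 2; 2]], [:: 1; 1; 2; 1; 1; 2; 2]);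
  ([:: ], [:: [:: 1; 1; 2; 1; 2; 1; 2]], [:: 1; 1; 2; 1; 2; 1; 2]);
  ([:: ], [:: [:: 1; 1; 2; 1; 2; 2; 1]], [:: 1; 1; 2; 1; 2; 2; 1]);
  ([:: ], [:: [:: 1; 1; 2; 2; 1; 1; 2]], [:: 1; 1; 2; 2; 1; 1; 2]);
  ([:: ], [:: [:: 1; 1; 2; 2; 1; 2; 1]], [:: 1; 1; 2; 2; 1; 2; 1]);
  ([:: ], [:: [:: 1; 1; 2; 2; 2; 1; 1]], [:: 1; 1; 2; 2; 2; 1; 1]);
  ([:: [:: 1; 1; 3; 1; 1; 1; 1]; [:: 1; 2; 1; 1; 1; 1; 2]; [:: 1; 2; 1; 1; 1; 2; 1]; [:: 1; 2; 1; 1; 2; 1; 1]; [:: 1; 2; 1; 2; 1; 1; 1]; [:: 1; 2; 2; 1; 1; 1; 1]; [:: 1; 1; 1; 1; 1; 1; 2]; [:: 1; 1; 1; 1; 1; 2; 1]; [:: 1; 1; 1; 1; 2; 1; 1]; [:: 1; 1; 1; 2; 1; 1; 1]; [:: 1; 1; 2; 1; 1; 1; 1]], [:: [:: 1; 1; 1; 1; 1; 1; 4]; [:: 1; 1; 1; 1; 1; 4; 1]; [:: 1; 1; 1; 1; 2; 2; 2]; [:: 1; 1; 1; 1; 4; 1; 1]; [:: 1; 1; 1; 2; 1; 2; 2]; [:: 1; 1; 1; 2; 2; 1; 2]; [:: 1; 1; 1; 2; 2; 2; 1]; [:: 1; 1; 1; 4; 1; 1; 1]; [:: 1; 1; 2;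 1; 1; 2; 2]; [:: 1; 1; 2; 1; 2; 1; 2]; [:: 1; 1; 2; 1; 2; 2; 1]; [:: 1; 1; 2; 2; 1; 1; 2]; [:: 1; 1; 2; 2; 1; 2; 1]; [:: 1; 1; 2; 2; 2; 1; 1]], [:: 1; 1; 3; 1; 1; 1; 2]);
  ([:: [:: 1; 2; 1; 1; 1; 1; 2]; [:: 1; 2; 1; 1; 1; 2; 1]; [:: 1; 2; 1; 1; 2; 1; 1]; [:: 1; 2; 1; 2; 1; 1; 1]; [:: 1; 2; 2; 1; 1; 1; 1]; [:: 1; 1; 1; 1; 1; 1; 2]; [:: 1; 1; 1; 1; 1; 2; 1]; [:: 1; 1; 1; 1; 2; 1; 1]; [:: 1; 1; 1; 2; 1; 1; 1]; [:: 1; 1; 2; 1; 1; 1; 1]], [:: [:: 1; 1; 1; 1; 1; 1; 4]; [:: 1; 1; 1; 1; 1; 4; 1]; [:: 1; 1; 1; 1; 2; 2; 2]; [:: 1; 1; 1; 1; 4; 1; 1]; [:: 1; 1; 1; 2; 1; 2; 2]; [:: 1; 1; 1; 2; 2; 1; 2]; [:: 1; 1; 1; 2; 2; 2; 1]; [:: 1; 1; 1; 4; 1; 1; 1]; [:: 1; 1; 2; 1; 1; 2; 2]; [:: 1; 1; 2; 1; 2; 1; 2]; [:: 1; 1; 2; 1; 2; 2; 1]; [:: 1; 1; 2; 2; 1; 1; 2]; [:: 1; 1; 2; 2; 1; 2; 1]; [:: 1; 1; 2; 2; 2; 1; 1]], [:: 1; 1; 4; 1; 1; 1; 1]);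
  ([:: ], [:: [:: 1; 2; 1; 1; 1; 2; 2]], [:: 1; 2; 1; 1; 1; 2; 2]);
  ([:: ], [:: [:: 1; 2; 1; 1; 2; 1; 2]], [:: 1; 2; 1; 1; 2; 1; 2]);
  ([:: ], [:: [:: 1; 2; 1; 1; 2; 2; 1]], [:: 1; 2; 1; 1; 2; 2; 1]);
  ([:: ], [:: [:: 1; 2; 1; 2; 1; 1; 2]], [:: 1; 2; 1; 2; 1; 1; 2]);
  ([:: ], [:: [:: 1; 2; 1; 2; 1; 2; 1]], [:: 1; 2; 1; 2; 1; 2; 1]);
  ([:: ], [:: [:: 1; 2; 1; 2; 2; 1; 1]], [:: 1; 2; 1; 2; 2; 1; 1]);
  ([:: [:: 1; 1; 1; 1; 1; 2; 2]; [:: 1; 1; 1; 1; 2; 1; 2]; [:: 1; 1; 1; 2; 1; 1; 2]; [:: 1; 1; 2; 1; 1; 1; 2]; [:: 1; 2; 1; 1; 1; 1; 2]; [:: 1; 1; 1; 1; 1; 1; 2]], [:: [:: 1; 1; 1; 1; 1; 1; 4]; [:: 1; 1; 1; 1; 2; 2; 2]; [:: 1; 1; 1; 2; 1; 2; 2]; [:: 1; 1; 1; 2; 2; 1; 2]; [:: 1; 1; 2; 1; 1; 2; 2]; [:: 1; 1; 2; 1; 2; 1; 2]; [:: 1; 1; 2; 2; 1; 1; 2]; [:: 1; 2; 1; 1; 1; 2; 2]; [:: 1; 2; 1; 1; 2; 1; 2]; [:: 1; 2; 1; 2; 1; 1; 2]], [:: 1; 2; 2; 1; 1; 1; 2]);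
  ([:: [:: 1; 1; 1; 1; 1; 2; 2]; [:: 1; 1; 1; 1; 2; 2; 1]; [:: 1; 1; 1; 2; 1; 2; 1]; [:: 1; 1; 2; 1; 1; 2; 1]; [:: 1; 2; 1; 1; 1; 2; 1]; [:: 1; 1; 1; 1; 1; 2; 1]], [:: [:: 1; 1; 1; 1; 1; 4; 1]; [:: 1; 1; 1; 1; 2; 2; 2]; [:: 1; 1; 1; 2; 1; 2; 2]; [:: 1; 1; 1; 2; 2; 2; 1]; [:: 1; 1; 2; 1; 1; 2; 2]; [:: 1; 1; 2; 1; 2; 2; 1]; [:: 1; 1; 2; 2; 1; 2; 1]; [:: 1; 2; 1; 1; 1; 2; 2]; [:: 1; 2; 1; 1; 2; 2; 1]; [:: 1; 2; 1; 2; 1; 2; 1]], [:: 1; 2; 2; 1; 1; 2; 1]);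
  ([:: [:: 1; 1; 1; 1; 2; 1; 2]; [:: 1; 1; 1; 1; 2; 2; 1]; [:: 1; 1; 1; 2; 2; 1; 1]; [:: 1; 1; 2; 1; 2; 1; 1]; [:: 1; 2; 1; 1; 2; 1; 1]; [:: 1; 1; 1; 1; 2; 1; 1]], [:: [:: 1; 1; 1; 1; 2; 2; 2]; [:: 1; 1; 1; 1; 4; 1; 1]; [:: 1; 1; 1; 2; 2; 1; 2]; [:: 1; 1; 1; 2; 2; 2; 1]; [:: 1; 1; 2; 1; 2; 1; 2]; [:: 1; 1; 2; 1; 2; 2; 1]; [:: 1; 1; 2; 2; 2; 1; 1]; [:: 1; 2; 1; 1; 2; 1; 2]; [:: 1; 2; 1; 1; 2; 2; 1]; [:: 1; 2; 1; 2; 2; 1; 1]], [:: 1; 2; 2; 1; 2; 1; 1]);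
  ([:: [:: 1; 1; 1; 2; 1; 1; 2]; [:: 1; 1; 1; 2; 1; 2; 1]; [:: 1; 1; 1; 2; 2; 1; 1]; [:: 1; 1; 2; 2; 1; 1; 1]; [:: 1; 2; 1; 2; 1; 1; 1]; [:: 1; 1; 1; 2; 1; 1; 1]], [:: [:: 1; 1; 1; 2; 1; 2; 2]; [:: 1; 1; 1; 2; 2; 1; 2]; [:: 1; 1; 1; 2; 2; 2; 1]; [:: 1; 1; 1; 4; 1; 1; 1]; [:: 1; 1; 2; 2; 1; 1; 2]; [:: 1; 1; 2; 2; 1; 2; 1]; [:: 1; 1; 2; 2; 2; 1; 1]; [:: 1; 2; 1; 2; 1; 1; 2]; [:: 1; 2; 1; 2; 1; 2; 1]; [:: 1; 2; 1; 2; 2; 1; 1]], [:: 1; 2; 2; 2; 1; 1; 1]);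
  ([:: [:: 1; 1; 2; 1; 1; 1; 2]; [:: 1; 1; 2; 1; 1; 2; 1]; [:: 1; 1; 2; 1; 2; 1; 1]; [:: 1; 1; 2; 2; 1; 1; 1]; [:: 1; 2; 2; 1; 1; 1; 1]; [:: 1; 3; 1; 1; 1; 1; 1]; [:: 1; 1; 1; 1; 1; 1; 2]; [:: 1; 1; 1; 1; 1; 2; 1]; [:: 1; 1; 1; 1; 2; 1; 1]; [:: 1; 1; 1; 2; 1; 1; 1]; [:: 1; 2; 1; 1; 1; 1; 1]], [:: [:: 1; 1; 1; 1; 1; 1; 4]; [:: 1; 1; 1; 1; 1; 4; 1]; [:: 1; 1; 1; 1; 2; 2; 2]; [:: 1; 1; 1; 1; 4; 1; 1]; [:: 1; 1; 1; 2; 1; 2; 2]; [:: 1; 1; 1; 2; 2; 1; 2]; [:: 1; 1; 1; 2; 2; 2; 1]; [:: 1; 1; 1; 4; 1; 1; 1]; [:: 1; 2; 1; 1; 1; 2; 2]; [:: 1; 2; 1; 1; 2; 1; 2]; [:: 1; 2; 1; 1; 2; 2; 1]; [:: 1; 2; 1; 2; 1; 1; 2]; [:: 1; 2; 1; 2; 1; 2; 1]; [:: 1; 2; 1; 2; 2; 1; 1]], [:: 1; 3; 1; 1; 1; 1; 2]);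
  ([:: [:: 1; 1; 2; 1; 1; 1; 2]; [:: 1; 1; 2; 1; 1; 2; 1]; [:: 1; 1; 2; 1; 2; 1; 1]; [:: 1; 1; 2; 2; 1; 1; 1]; [:: 1; 2; 2; 1; 1; 1; 1]; [:: 1; 1; 1; 1; 1; 1; 2]; [:: 1; 1; 1; 1; 1; 2; 1]; [:: 1; 1; 1; 1; 2; 1; 1]; [:: 1; 1; 1; 2; 1; 1; 1]; [:: 1; 2; 1; 1; 1; 1; 1]], [:: [:: 1; 1; 1; 1; 1; 1; 4]; [:: 1; 1; 1; 1; 1; 4; 1]; [:: 1; 1; 1; 1; 2; 2; 2]; [:: 1; 1; 1; 1; 4; 1; 1]; [:: 1; 1; 1; 2; 1; 2; 2]; [:: 1; 1; 1; 2; 2; 1; 2]; [:: 1; 1; 1; 2; 2; 2; 1]; [:: 1; 1; 1; 4; 1; 1; 1]; [:: 1; 2; 1; 1; 1; 2; 2]; [:: 1; 2; 1; 1; 2; 1; 2]; [:: 1; 2; 1; 1; 2; 2; 1]; [:: 1; 2; 1; 2; 1; 1; 2]; [:: 1; 2; 1; 2; 1; 2; 1]; [:: 1; 2; 1; 2; 2; 1; 1]], [:: 1; 4; 1; 1; 1; 1; 1]);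
  ([:: [:: 1; 1; 1; 1; 1; 2; 2]], [:: [:: 1; 1; 1; 1; 2; 2; 2]; [:: 1; 1; 1; 2; 1; 2; 2]; [:: 1; 1; 2; 1; 1; 2; 2]; [:: 1; 2; 1; 1; 1; 2; 2]], [:: 2; 1; 1; 1; 1; 2; 2]);
  ([:: [:: 1; 1; 1; 1; 2; 1; 2]], [:: [:: 1; 1; 1; 1; 2; 2; 2]; [:: 1; 1; 1; 2; 2; 1; 2]; [:: 1; 1; 2; 1; 2; 1; 2]; [:: 1; 2; 1; 1; 2; 1; 2]], [:: 2; 1; 1; 1; 2; 1; 2]);
  ([:: [:: 1; 1; 1; 1; 2; 2; 1]], [:: [:: 1; 1; 1; 1; 2; 2; 2]; [:: 1; 1; 1; 2; 2; 2; 1]; [:: 1; 1; 2; 1; 2; 2; 1]; [:: 1; 2; 1; 1; 2; 2; 1]], [:: 2; 1; 1; 1; 2; 2; 1]);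
  ([:: [:: 1; 1; 1; 2; 1; 1; 2]], [:: [:: 1; 1; 1; 2; 1; 2; 2]; [:: 1; 1; 1; 2; 2; 1; 2]; [:: 1; 1; 2; 2; 1; 1; 2]; [:: 1; 2; 1; 2; 1; 1; 2]], [:: 2; 1; 1; 2; 1; 1; 2]);
  ([:: [:: 1; 1; 1; 2; 1; 2; 1]], [:: [:: 1; 1; 1; 2; 1; 2; 2]; [:: 1; 1; 1; 2; 2; 2; 1]; [:: 1; 1; 2; 2; 1; 2; 1]; [:: 1; 2; 1; 2; 1; 2; 1]], [:: 2; 1; 1; 2; 1; 2; 1]);
  ([:: [:: 1; 1; 1; 2; 2; 1; 1]], [:: [:: 1; 1; 1; 2; 2; 1; 2]; [:: 1; 1; 1; 2; 2; 2; 1]; [:: 1; 1; 2; 2; 2; 1; 1]; [:: 1; 2; 1; 2; 2; 1; 1]], [:: 2; 1; 1; 2; 2; 1; 1]);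
  ([:: [:: 1; 1; 1; 1; 1; 2; 2]; [:: 1; 1; 1; 1; 2; 1; 2]; [:: 1; 1; 1; 2; 1; 1; 2]; [:: 1; 2; 1; 1; 1; 1; 2]; [:: 1; 1; 1; 1; 1; 1; 2]], [:: [:: 1; 1; 1; 1; 1; 1; 4]; [:: 1; 1; 1; 1; 2; 2; 2]; [:: 1; 1; 1; 2; 1; 2; 2]; [:: 1; 1; 1; 2; 2; 1; 2]; [:: 1; 2; 1; 1; 1; 2; 2]; [:: 1; 2; 1; 1; 2; 1; 2]; [:: 1; 2; 1; 2; 1; 1; 2]], [:: 2; 1; 2; 1; 1; 1; 2]);
  ([:: [:: 1; 1; 1; 1; 1; 2; 2]; [:: 1; 1; 1; 1; 2; 2; 1]; [:: 1; 1; 1; 2; 1; 2; 1]; [:: 1; 2; 1; 1; 1; 2; 1]; [:: 1; 1; 1; 1; 1; 2; 1]], [:: [:: 1; 1; 1; 1; 1; 4; 1]; [:: 1; 1; 1; 1; 2; 2; 2]; [:: 1; 1; 1; 2; 1; 2; 2]; [:: 1; 1; 1; 2; 2; 2; 1]; [:: 1; 2; 1; 1; 1; 2; 2]; [:: 1; 2; 1; 1; 2; 2; 1]; [:: 1; 2; 1; 2; 1; 2; 1]], [:: 2; 1; 2; 1; 1; 2; 1]);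
  ([:: [:: 1; 1; 1; 1; 2; 1; 2]; [:: 1; 1; 1; 1; 2; 2; 1]; [:: 1; 1; 1; 2; 2; 1; 1]; [:: 1; 2; 1; 1; 2; 1; 1]; [:: 1; 1; 1; 1; 2; 1; 1]], [:: [:: 1; 1; 1; 1; 2; 2; 2]; [:: 1; 1; 1; 1; 4; 1; 1]; [:: 1; 1; 1; 2; 2; 1; 2]; [:: 1; 1; 1; 2; 2; 2; 1]; [:: 1; 2; 1; 1; 2; 1; 2]; [:: 1; 2; 1; 1; 2; 2; 1]; [:: 1; 2; 1; 2; 2; 1; 1]], [:: 2; 1; 2; 1; 2; 1; 1]);
  ([:: [:: 1; 1; 1; 2; 1; 1; 2]; [:: 1; 1; 1; 2; 1; 2; 1]; [:: 1; 1; 1; 2; 2; 1; 1]; [:: 1; 2; 1; 2; 1; 1; 1]; [:: 1; 1; 1; 2; 1; 1; 1]], [:: [:: 1; 1; 1; 2; 1; 2; 2]; [:: 1; 1; 1; 2; 2; 1; 2]; [:: 1; 1; 1; 2; 2; 2; 1]; [:: 1; 1; 1; 4; 1; 1; 1]; [:: 1; 2; 1; 2; 1; 1; 2]; [:: 1; 2; 1; 2; 1; 2; 1]; [:: 1; 2; 1; 2; 2; 1; 1]], [:: 2; 1; 2; 2; 1; 1; 1]);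
  ([:: [:: 1; 1; 1; 1; 1; 2; 2]; [:: 1; 1; 1; 1; 2; 1; 2]; [:: 1; 1; 1; 2; 1; 1; 2]; [:: 1; 1; 2; 1; 1; 1; 2]; [:: 1; 1; 1; 1; 1; 1; 2]], [:: [:: 1; 1; 1; 1; 1; 1; 4]; [:: 1; 1; 1; 1; 2; 2; 2]; [:: 1; 1; 1; 2; 1; 2; 2]; [:: 1; 1; 1; 2; 2; 1; 2]; [:: 1; 1; 2; 1; 1; 2; 2]; [:: 1; 1; 2; 1; 2; 1; 2]; [:: 1; 1; 2; 2; 1; 1; 2]], [:: 2; 2; 1; 1; 1; 1; 2]);
  ([:: [:: 1; 1; 1; 1; 1; 2; 2]; [:: 1; 1; 1; 1; 2; 2; 1]; [:: 1; 1; 1; 2; 1; 2; 1]; [:: 1; 1; 2; 1; 1; 2; 1]; [:: 1; 1; 1; 1; 1; 2; 1]], [:: [:: 1; 1; 1; 1; 1; 4; 1]; [:: 1; 1; 1; 1; 2; 2; 2]; [:: 1; 1; 1; 2; 1; 2; 2]; [:: 1; 1; 1; 2; 2; 2; 1]; [:: 1; 1; 2; 1; 1; 2; 2]; [:: 1; 1; 2; 1; 2; 2; 1]; [:: 1; 1; 2; 2; 1; 2; 1]], [:: 2; 2; 1; 1; 1; 2; 1]);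
  ([:: [:: 1; 1; 1; 1; 2; 1; 2]; [:: 1; 1; 1; 1; 2; 2; 1]; [:: 1; 1; 1; 2; 2; 1; 1]; [:: 1; 1; 2; 1; 2; 1; 1]; [:: 1; 1; 1; 1; 2; 1; 1]], [:: [:: 1; 1; 1; 1; 2; 2; 2]; [:: 1; 1; 1; 1; 4; 1; 1]; [:: 1; 1; 1; 2; 2; 1; 2]; [:: 1; 1; 1; 2; 2; 2; 1]; [:: 1; 1; 2; 1; 2; 1; 2]; [:: 1; 1; 2; 1; 2; 2; 1]; [:: 1; 1; 2; 2; 2; 1; 1]], [:: 2; 2; 1; 1; 2; 1; 1]);
  ([:: [:: 1; 1; 1; 2; 1; 1; 2]; [:: 1; 1; 1; 2; 1; 2; 1]; [:: 1; 1; 1; 2; 2; 1; 1]; [:: 1; 1; 2; 2; 1; 1; 1]; [:: 1; 1; 1; 2; 1; 1; 1]], [:: [:: 1; 1; 1; 2; 1; 2; 2]; [:: 1; 1; 1; 2; 2; 1; 2]; [:: 1; 1; 1; 2; 2; 2; 1]; [:: 1; 1; 1; 4; 1; 1; 1]; [:: 1; 1; 2; 2; 1; 1; 2]; [:: 1; 1; 2; 2; 1; 2; 1]; [:: 1; 1; 2; 2; 2; 1; 1]], [:: 2; 2; 1; 2; 1; 1; 1]);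
  ([:: [:: 1; 1; 2; 1; 1; 1; 2]; [:: 1; 1; 2; 1; 1; 2; 1]; [:: 1; 1; 2; 1; 2; 1; 1]; [:: 1; 1; 2; 2; 1; 1; 1]; [:: 1; 2; 1; 1; 1; 1; 2]; [:: 1; 2; 1; 1; 1; 2; 1]; [:: 1; 2; 1; 1; 2; 1; 1]; [:: 1; 2; 1; 2; 1; 1; 1]; [:: 1; 2; 2; 1; 1; 1; 1]; [:: 1; 1; 1; 1; 1; 1; 2]; [:: 1; 1; 1; 1; 1; 2; 1]; [:: 1; 1; 1; 1; 2; 1; 1]; [:: 1; 1; 1; 2; 1; 1; 1]], [:: [:: 1; 1; 1; 1; 1; 1; 4]; [:: 1; 1; 1; 1; 1; 4; 1]; [:: 1; 1; 1; 1; 2; 2; 2]; [:: 1; 1; 1; 1; 4; 1; 1]; [:: 1; 1; 1; 2; 1; 2; 2]; [:: 1; 1; 1; 2; 2; 1; 2]; [:: 1; 1; 1; 2; 2; 2; 1]; [:: 1; 1; 1; 4; 1; 1; 1]], [:: 2; 2; 2; 1; 1; 1; 1]);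
  ([:: [:: 1; 1; 1; 1; 1; 2; 2]; [:: 1; 1; 1; 1; 2; 1; 2]; [:: 1; 1; 1; 1; 2; 2; 1]; [:: 1; 1; 1; 2; 1; 1; 2]; [:: 1; 1; 1; 2; 1; 2; 1]; [:: 1; 1; 1; 2; 2; 1; 1]; [:: 1; 2; 2; 1; 1; 1; 1]; [:: 3; 1; 1; 1; 1; 1; 1]; [:: 1; 1; 1; 1; 1; 1; 2]; [:: 1; 1; 1; 1; 1; 2; 1]; [:: 1; 1; 1; 1; 2; 1; 1]; [:: 1; 1; 1; 2; 1; 1; 1]; [:: 2; 1; 1; 1; 1; 1; 1]], [:: [:: 1; 1; 1; 1; 1; 1; 4]; [:: 1; 1; 1; 1; 1; 4; 1]; [:: 1; 1; 1; 1; 4; 1; 1]; [:: 1; 1; 1; 4; 1; 1; 1]; [:: 1; 1; 2; 1; 1; 2; 2]; [:: 1; 1; 2; 1; 2; 1; 2]; [:: 1; 1; 2; 1; 2; 2; 1]; [:: 1; 1; 2; 2; 1; 1; 2]; [:: 1; 1; 2; 2; 1; 2; 1]; [:: 1; 1; 2; 2; 2; 1; 1]; [:: 1; 2; 1; 1; 1; 2; 2]; [:: 1; 2; 1; 1; 2; 1; 2]; [:: 1; 2; 1; 1; 2; 2; 1]; [:: 1; 2; 1; 2; 1; 1; 2]; [:: 1; 2; 1; 2; 1; 2; 1]; [:: 1; 2; 1; 2; 2; 1; 1]], [:: 3; 1; 1; 1; 1; 1; 2]);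
  ([:: [:: 1; 1; 1; 1; 1; 2; 2]; [:: 1; 1; 1; 1; 2; 1; 2]; [:: 1; 1; 1; 1; 2; 2; 1]; [:: 1; 1; 1; 2; 1; 1; 2]; [:: 1; 1; 1; 2; 1; 2; 1]; [:: 1; 1; 1; 2; 2; 1; 1]; [:: 1; 2; 2; 1; 1; 1; 1]; [:: 1; 1; 1; 1; 1; 1; 2]; [:: 1; 1; 1; 1; 1; 2; 1]; [:: 1; 1; 1; 1; 2; 1; 1]; [:: 1; 1; 1; 2; 1; 1; 1]; [:: 2; 1; 1; 1; 1; 1; 1]], [:: [:: 1; 1; 1; 1; 1; 1; 4]; [:: 1; 1; 1; 1; 1; 4; 1]; [:: 1; 1; 1; 1; 4; 1; 1]; [:: 1; 1; 1; 4; 1; 1; 1]; [:: 1; 1; 2; 1; 1; 2; 2]; [:: 1; 1; 2; 1; 2; 1; 2]; [:: 1; 1; 2; 1; 2; 2; 1]; [:: 1; 1; 2; 2; 1; 1; 2]; [:: 1; 1; 2; 2; 1; 2; 1]; [:: 1; 1; 2; 2; 2; 1; 1]; [:: 1; 2; 1; 1; 1; 2; 2]; [:: 1; 2; 1; 1; 2; 1; 2]; [:: 1; 2; 1; 1; 2; 2; 1]; [:: 1; 2; 1; 2; 1; 1; 2]; [:: 1; 2; 1; 2; 1; 2; 1]; [:: 1; 2; 1; 2; 2; 1; 1]], [:: 4; 1; 1; 1; 1; 1; 1])].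

Definition up_h8w5 : seq (seq (seq nat) * seq nat) :=
  [:: ([:: [:: 1; 1; 1; 1; 1; 1; 2; 2]; [:: 1; 2; 2; 1; 1; 1; 1; 1]; [:: 2; 1; 1; 1; 1; 1; 1; 2]; [:: 2; 1; 1; 1; 1; 1; 2; 1]; [:: 2; 1; 2; 1; 1; 1; 1; 1]; [:: 2; 2; 1; 1; 1; 1; 1; 1]], [:: 1; 1; 1; 1; 1; 1; 2; 2]);
  ([:: [:: 1; 1; 1; 1; 1; 2; 1; 2]; [:: 1; 2; 2; 1; 1; 1; 1; 1]; [:: 2; 1; 1; 1; 1; 1; 1; 2]; [:: 2; 1; 1; 1; 1; 2; 1; 1]; [:: 2; 1; 2; 1; 1; 1; 1; 1]; [:: 2; 2; 1; 1; 1; 1; 1; 1]], [:: 1; 1; 1; 1; 1; 2; 1; 2]);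
  ([:: [:: 1; 1; 1; 1; 1; 2; 2; 1]; [:: 1; 2; 2; 1; 1; 1; 1; 1]; [:: 2; 1; 1; 1; 1; 1; 2; 1]; [:: 2; 1; 1; 1; 1; 2; 1; 1]; [:: 2; 1; 2; 1; 1; 1; 1; 1]; [:: 2; 2; 1; 1; 1; 1; 1; 1]], [:: 1; 1; 1; 1; 1; 2; 2; 1]);
  ([:: [:: 1; 1; 1; 1; 2; 1; 1; 2]; [:: 1; 2; 2; 1; 1; 1; 1; 1]; [:: 2; 1; 1; 1; 1; 1; 1; 2]; [:: 2; 1; 1; 1; 2; 1; 1; 1]; [:: 2; 1; 2; 1; 1; 1; 1; 1]; [:: 2; 2; 1; 1; 1; 1; 1; 1]], [:: 1; 1; 1; 1; 2; 1; 1; 2]);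
  ([:: [:: 1; 1; 1; 1; 2; 1; 2; 1]; [:: 1; 2; 2; 1; 1; 1; 1; 1]; [:: 2; 1; 1; 1; 1; 1; 2; 1]; [:: 2; 1; 1; 1; 2; 1; 1; 1]; [:: 2; 1; 2; 1; 1; 1; 1; 1]; [:: 2; 2; 1; 1; 1; 1; 1; 1]], [:: 1; 1; 1; 1; 2; 1; 2; 1]);
  ([:: [:: 1; 1; 1; 1; 2; 2; 1; 1]; [:: 1; 2; 2; 1; 1; 1; 1; 1]; [:: 2; 1; 1; 1; 1; 2; 1; 1]; [:: 2; 1; 1; 1; 2; 1; 1; 1]; [:: 2; 1; 2; 1; 1; 1; 1; 1]; [:: 2; 2; 1; 1; 1; 1; 1; 1]], [:: 1; 1; 1; 1; 2; 2; 1; 1]);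
  ([:: [:: 1; 1; 1; 2; 1; 1; 1; 2]; [:: 1; 2; 2; 1; 1; 1; 1; 1]; [:: 2; 1; 1; 1; 1; 1; 1; 2]; [:: 2; 1; 1; 2; 1; 1; 1; 1]; [:: 2; 1; 2; 1; 1; 1; 1; 1]; [:: 2; 2; 1; 1; 1; 1; 1; 1]], [:: 1; 1; 1; 2; 1; 1; 1; 2]);
  ([:: [:: 1; 1; 1; 2; 1; 1; 2; 1]; [:: 1; 2; 2; 1; 1; 1; 1; 1]; [:: 2; 1; 1; 1; 1; 1; 2; 1]; [:: 2; 1; 1; 2; 1; 1; 1; 1]; [:: 2; 1; 2; 1; 1; 1; 1; 1]; [:: 2; 2; 1; 1; 1; 1; 1; 1]], [:: 1; 1; 1; 2; 1; 1; 2; 1]);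
  ([:: [:: 1; 1; 1; 2; 1; 2; 1; 1]; [:: 1; 2; 2; 1; 1; 1; 1; 1]; [:: 2; 1; 1; 1; 1; 2; 1; 1]; [:: 2; 1; 1; 2; 1; 1; 1; 1]; [:: 2; 1; 2; 1; 1; 1; 1; 1]; [:: 2; 2; 1; 1; 1; 1; 1; 1]], [:: 1; 1; 1; 2; 1; 2; 1; 1]);
  ([:: [:: 1; 1; 1; 2; 2; 1; 1; 1]; [:: 1; 2; 2; 1; 1; 1; 1; 1]; [:: 2; 1; 1; 1; 2; 1; 1; 1]; [:: 2; 1; 1; 2; 1; 1; 1; 1]; [:: 2; 1; 2; 1; 1; 1; 1; 1]; [:: 2; 2; 1; 1; 1; 1; 1; 1]], [:: 1; 1; 1; 2; 2; 1; 1; 1]);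
  ([:: [:: 1; 1; 2; 1; 1; 1; 1; 2]; [:: 1; 2; 2; 1; 1; 1; 1; 1]; [:: 2; 1; 1; 1; 1; 1; 1; 2]; [:: 2; 2; 1; 1; 1; 1; 1; 1]], [:: 1; 1; 2; 1; 1; 1; 1; 2]);
  ([:: [:: 1; 1; 2; 1; 1; 1; 2; 1]; [:: 1; 2; 2; 1; 1; 1; 1; 1]; [:: 2; 1; 1; 1; 1; 1; 2; 1]; [:: 2; 2; 1; 1; 1; 1; 1; 1]], [:: 1; 1; 2; 1; 1; 1; 2; 1]);
  ([:: [:: 1; 1; 2; 1; 1; 2; 1; 1]; [:: 1; 2; 2; 1; 1; 1; 1; 1]; [:: 2; 1; 1; 1; 1; 2; 1; 1]; [:: 2; 2; 1; 1; 1; 1; 1; 1]], [:: 1; 1; 2; 1; 1; 2; 1; 1]);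
  ([:: [:: 1; 1; 2; 1; 2; 1; 1; 1]; [:: 1; 2; 2; 1; 1; 1; 1; 1]; [:: 2; 1; 1; 1; 2; 1; 1; 1]; [:: 2; 2; 1; 1; 1; 1; 1; 1]], [:: 1; 1; 2; 1; 2; 1; 1; 1]);
  ([:: [:: 1; 1; 2; 2; 1; 1; 1; 1]; [:: 1; 2; 2; 1; 1; 1; 1; 1]; [:: 2; 1; 1; 2; 1; 1; 1; 1]; [:: 2; 2; 1; 1; 1; 1; 1; 1]], [:: 1; 1; 2; 2; 1; 1; 1; 1]);
  ([:: [:: 1; 2; 1; 1; 1; 1; 1; 2]; [:: 1; 2; 2; 1; 1; 1; 1; 1]; [:: 2; 1; 1; 1; 1; 1; 1; 2]; [:: 2; 1; 2; 1; 1; 1; 1; 1]], [:: 1; 2; 1; 1; 1; 1; 1; 2]);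
  ([:: [:: 1; 2; 1; 1; 1; 1; 2; 1]; [:: 1; 2; 2; 1; 1; 1; 1; 1]; [:: 2; 1; 1; 1; 1; 1; 2; 1]; [:: 2; 1; 2; 1; 1; 1; 1; 1]], [:: 1; 2; 1; 1; 1; 1; 2; 1]);
  ([:: [:: 1; 2; 1; 1; 1; 2; 1; 1]; [:: 1; 2; 2; 1; 1; 1; 1; 1]; [:: 2; 1; 1; 1; 1; 2; 1; 1]; [:: 2; 1; 2; 1; 1; 1; 1; 1]], [:: 1; 2; 1; 1; 1; 2; 1; 1]);
  ([:: [:: 1; 2; 1; 1; 2; 1; 1; 1]; [:: 1; 2; 2; 1; 1; 1; 1; 1]; [:: 2; 1; 1; 1; 2; 1; 1; 1]; [:: 2; 1; 2; 1; 1; 1; 1; 1]], [:: 1; 2; 1; 1; 2; 1; 1; 1]);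
  ([:: [:: 1; 2; 1; 2; 1; 1; 1; 1]; [:: 1; 2; 2; 1; 1; 1; 1; 1]; [:: 2; 1; 1; 2; 1; 1; 1; 1]; [:: 2; 1; 2; 1; 1; 1; 1; 1]], [:: 1; 2; 1; 2; 1; 1; 1; 1])].

Definition low_h8w5 : seq (seq (seq nat) * seq (seq nat) * seq nat) :=
  [:: ([:: [:: 1; 1; 1; 1; 1; 1; 1; 2]; [:: 1; 1; 1; 1; 1; 1; 2; 1]; [:: 1; 1; 1; 1; 1; 1; 1; 1]], [:: ], [:: 1; 1; 1; 1; 1; 1; 2; 2]);
  ([:: [:: 1; 1; 1; 1; 1; 1; 1; 2]; [:: 1; 1; 1; 1; 1; 2; 1; 1]; [:: 1; 1; 1; 1; 1; 1; 1; 1]], [:: ], [:: 1; 1; 1; 1; 1; 2; 1; 2]);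
  ([:: [:: 1; 1; 1; 1; 1; 1; 1; 2]; [:: 1; 1; 1; 1; 1; 1; 1; 1]], [:: ], [:: 1; 1; 1; 1; 1; 2; 2; 1]);
  ([:: [:: 1; 1; 1; 1; 2; 1; 1; 1]], [:: ], [:: 1; 1; 1; 1; 2; 1; 1; 2]);
  ([:: [:: 1; 1; 1; 2; 1; 1; 1; 1]], [:: ], [:: 1; 1; 1; 2; 1; 1; 1; 2]);
  ([:: [:: 1; 1; 2; 1; 1; 1; 1; 1]], [:: ], [:: 1; 1; 2; 1; 1; 1; 1; 2]);
  ([:: [:: 1; 2; 1; 1; 1; 1; 1; 1]], [:: ], [:: 1; 2; 1; 1; 1; 1; 1; 2]);
  ([:: [:: 1; 1; 1; 1; 1; 1; 1; 2]; [:: 1; 1; 1; 1; 1; 1; 2; 1]; [:: 1; 1; 1; 1; 1; 2; 1; 1]; [:: 1; 1; 1; 1; 2; 1; 1; 1]; [:: 1; 1; 1; 2; 1; 1; 1; 1]; [:: 1; 1; 2; 1; 1; 1; 1; 1]; [:: 1; 2; 1; 1; 1; 1; 1; 1]], [:: ], [:: 2; 1; 1; 1; 1; 1; 1; 2])].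

Lemma lex_le_false N w1 w2 : (0 < N)%N -> (w2 0 < w1 0)%N -> lex_le N w1 w2 = false.
Proof.
move=> N0 lt; rewrite lex_leE /lexleb /lexltb; case: N N0 => // N _.
have ne : (w1 0 == w2 0) = false by rewrite gtn_eqF.
apply/negbTE; rewrite negb_or; apply/andP; split; last by rewrite /= ne.
apply/hasPn => i _; case: i => [|i] /=; first by rewrite ltnNge ltnW.
by rewrite ne andbF.
Qed.

Lemma two_le x : (0 < x)%N -> (2 <= odd x + x)%N.
Proof. by case: x => [|[|x]] //= _; rewrite addnC. Qed.

Lemma w0_ge h (m : PosMon h 10) : (2 * h <= weight (mexp m) 0 + 10)%N.
Proof.
have /andP[/forallP pos /eqP sm] := valP m.
rewrite -[X in (_ <= _ + X)%N]sm.
rewrite /weight -big_split /=.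
apply: (@leq_trans (\sum_(j : 'I_h) 2)%N).
  by rewrite sum_nat_const card_ord mulnC.
apply: leq_sum => j _; rewrite /alpha expn0 divn1.
exact: (two_le (pos j)).
Qed.

Lemma big_h h s : (9 <= h)%N -> s \in omegas -> dimQP h 10 s = 0%N.
Proof.
move=> h9 so.
have w6 : (wvec s 0 <= 6)%N.
  by have /allP := (erefl true : all (fun s => wvec s 0 <= 6)%N omegas); apply.
suff : \dim (Ple h 10 s) = 0%N by rewrite /dimQP => ->; rewrite sub0n.
apply/eqP; rewrite -leqn0 /Ple; apply: (leq_trans (dimv_leq_sum _ _ _)).
rewrite leqn0; apply/eqP; apply: big_pred0 => m.
apply: lex_le_false; first by rewrite /wbound leq_max orbT.
have := w0_ge m; rewrite leq_eqVlt => H.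
apply: (leq_ltn_trans w6).
rewrite -(ltn_add2r 10); apply: (@leq_trans (2 * h)%N); last by move: H => /orP[/eqP ->|/ltnW].
by apply: (@leq_trans (2 * 9)%N) => //; rewrite leq_mul2l.
Qed.

Lemma uc7 : uniq (comps 7 10). Proof. by vm_compute. Qed.
Lemma vc7 : all (validl 7 10) (comps 7 10). Proof. by vm_compute. Qed.
Lemma uc8 : uniq (comps 8 10). Proof. by vm_compute. Qed.
Lemma vc8 : all (validl 8 10) (comps 8 10). Proof. by vm_compute. Qed.

Lemma z7 s : s \in [:: omega1; omega2; omega3] -> dimQP 7 10 s = 0%N.
Proof.
move=> so; apply: case_zero uc7 vc7 _.
by move: so; rewrite !inE => /or3P[] /eqP ->; vm_compute.
Qed.
Lemma z8 s : s \in [:: omega1; omega2; omega3; omega4] -> dimQP 8 10 s = 0%N.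
Proof.
move=> so; apply: case_zero uc8 vc8 _.
by move: so; rewrite !inE => /or4P[] /eqP ->; vm_compute.
Qed.

Lemma up_h7w4_ok : up_ok 7 10 omega4 up_h7w4. Proof. by vm_compute. Qed.
Lemma low_h7w4_ok : low_ok 7 10 omega4 low_h7w4. Proof. by vm_compute. Qed.
Lemma up_h7w5_ok : up_ok 7 10 omega5 up_h7w5. Proof. by vm_compute. Qed.
Lemma low_h7w5_ok : low_ok 7 10 omega5 low_h7w5. Proof. by vm_compute. Qed.
Lemma up_h8w5_ok : up_ok 8 10 omega5 up_h8w5. Proof. by vm_compute. Qed.
Lemma low_h8w5_ok : low_ok 8 10 omega5 low_h8w5. Proof. by vm_compute. Qed.

Lemma d7w4 : dimQP 7 10 omega4 = 20%N.
Proof. by rewrite (case_dim uc7 vc7 up_h7w4_ok low_h7w4_ok); vm_compute. Qed.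
Lemma d7w5 : dimQP 7 10 omega5 = 35%N.
Proof. by rewrite (case_dim uc7 vc7 up_h7w5_ok low_h7w5_ok); vm_compute. Qed.
Lemma d8w5 : dimQP 8 10 omega5 = 20%N.
Proof. by rewrite (case_dim uc8 vc8 up_h8w5_ok low_h8w5_ok); vm_compute. Qed.

Local Close Scope ring_scope.

Theorem mainTheorem8 :
  [/\ map (dimQP 7 10) omegas = [:: 0; 0; 0; 20; 35]%N,
      map (dimQP 8 10) omegas = [:: 0; 0; 0; 0; 20]%N &
      forall h : nat, (9 <= h)%N -> forall s, s \in omegas -> dimQP h 10 s = 0%N].
Proof.
split.
- by rewrite /omegas /= d7w4 d7w5 !z7 // !inE eqxx ?orbT.
- by rewrite /omegas /= d8w5 !z8 // !inE eqxx ?orbT.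
- by move=> h h9 s so; exact: big_h.
Qed.
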